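(* Let $\mathbb{S}=[0,1]$ with $0$ and $1$ identified, and let $H:\mathbb{S}\times\mathbb{R}\times\mathbb{R}\to\mathbb{R}$ be $C^\infty$ with $\frac{\partial^2H}{\partial p^2}>0$, $p\mapsto H(x,p,u)$ superlinear for each $(x,u)$, and $|\frac{\partial H}{\partial u}|\le\kappa$ for some $\kappa>0$. Let $u_0$ be a viscosity solution of $H(x,u'(x),u(x))=0$ on $\mathbb{S}$ such that $\frac{\partial H}{\partial p}(x,u_0'(x),u_0(x))\ne0$ at every differentiability point $x$ of $u_0$. Set $B(x)=\frac{\partial H}{\partial p}(x,u_0'(x),u_0(x))$, $$\mu=\frac{\int_0^1\frac{\partial H}{\partial u}(\tau,u_0'(\tau),u_0(\tau))B(\tau)^{-1}d\tau}{\int_0^1B(\tau)^{-1}d\tau},\qquad \rho(x)=\exp\left\{\int_0^x\frac{\mu-\frac{\partial H}{\partial u}(\tau,u_0'(\tau),u_0(\tau))}{B(\tau)}\,d\tau\right\}.$$ Assume $\mu\ne0$ and set $u_\epsilon(x)=u_0(x)-\frac{\mu}{|\mu|}\,\epsilon\,\rho(x)$. Then there exists $\epsilon_0>0$ such that: (1) for $\epsilon\in(0,\epsilon_0]$, $u_\epsilon$ is a $C^\infty$ function on $\mathbb{S}$ with $H(x,u_\epsilon'(x),u_\epsilon(x))<0$ for all $x\in\mathbb{S}$; (2) for $\epsilon\in[-\epsilon_0,0)$, $u_\epsilon$ is a $C^\infty$ function on $\mathbb{S}$ with $H(x,u_\epsilon'(x),u_\epsilon(x))>0$ for all $x\in\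mathbb{S}$.
   Context: It is known that under these assumptions $u_0$ is of class $C^\infty$, so $B$ is smooth and nowhere zero, and $\rho$ is a smooth positive function on $\mathbb{S}$ (with $\rho(0)=\rho(1)=1$). *)

(* Defs.v *)
From Stdlib Require Import Reals.
From Coquelicot Require Import Coquelicot.
Open Scope R_scope.

(* Functions on the circle S = [0,1]/(0~1) are represented as 1-periodic
   functions on R. *)
Definition periodic1 (f : R -> R) : Prop := forall x, f (x + 1) = f x.

Definition dx (F : R -> R -> R -> R) : R -> R -> R -> R :=
  fun x p u => Derive (fun t => F t p u) x.
Definition dp (F : R -> R -> R -> R) : R -> R -> R -> R :=
  fun x p u => Derive (fun t => F x t u) p.
Definition du (F : R -> R -> R -> R) : R -> R -> R -> R :=
  fun x p u => Derive (fun t => F x p t) u.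

(* Iterated partial derivative along a list of directions
   (0 = x, 1 = p, anything else = u); the head is applied last. *)
Fixpoint iter_partial (l : list nat) (F : R -> R -> R -> R) : R -> R -> R -> R :=
  match l with
  | nil => F
  | cons 0 l' => dx (iter_partial l' F)
  | cons 1 l' => dp (iter_partial l' F)
  | cons _ l' => du (iter_partial l' F)
  end.

Definition smooth3 (F : R -> R -> R -> R) : Prop :=
  forall l : list nat,
    (forall x p u,
       ex_derive (fun t => iter_partial l F t p u) x /\
       ex_derive (fun t => iter_partial l F x t u) p /\
       ex_derive (fun t => iter_partial l F x p t) u) /\
    (forall q : R * R * R,
       continuous (fun q : R * R * R =>
          iter_partial l F (fst (fst q)) (snd (fst q)) (snd q)) q).

Definition smooth1 (f : R -> R) : Prop := forall n x, ex_derive_n f n x.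

Definition C1 (phi : R -> R) : Prop :=
  (forall x, ex_derive phi x) /\ (forall x, continuous (Derive phi) x).

Definition local_max_at (g : R -> R) (x0 : R) : Prop :=
  exists d, 0 < d /\ forall y, Rabs (y - x0) < d -> g y <= g x0.
Definition local_min_at (g : R -> R) (x0 : R) : Prop :=
  exists d, 0 < d /\ forall y, Rabs (y - x0) < d -> g x0 <= g y.

Definition viscosity_subsolution (H : R -> R -> R -> R) (u : R -> R) : Prop :=
  forall (phi : R -> R) (x0 : R), C1 phi ->
    local_max_at (fun y => u y - phi y) x0 -> H x0 (Derive phi x0) (u x0) <= 0.
Definition viscosity_supersolution (H : R -> R -> R -> R) (u : R -> R) : Prop :=
  forall (phi : R -> R) (x0 : R), C1 phi ->
    local_min_at (fun y => u y - phi y) x0 -> 0 <= H x0 (Derive phi x0) (u x0).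
Definition viscosity_solution (H : R -> R -> R -> R) (u : R -> R) : Prop :=
  periodic1 u /\ (forall x, continuous u x) /\
  viscosity_subsolution H u /\ viscosity_supersolution H u.

Definition superlinear_in_p (H : R -> R -> R -> R) : Prop :=
  forall x u M, exists R0, forall p, R0 <= Rabs p -> M * Rabs p <= H x p u.

Definition Bfun (H : R -> R -> R -> R) (u0 : R -> R) (x : R) : R :=
  dp H x (Derive u0 x) (u0 x).
Definition Hu_along (H : R -> R -> R -> R) (u0 : R -> R) (x : R) : R :=
  du H x (Derive u0 x) (u0 x).
Definition mu_of (H : R -> R -> R -> R) (u0 : R -> R) : R :=
  RInt (fun t => Hu_along H u0 t / Bfun H u0 t) 0 1 /
  RInt (fun t => / Bfun H u0 t) 0 1.
Definition rho_of (H : R -> R -> R -> R) (u0 : R -> R) (x : R) : R :=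
  exp (RInt (fun t => (mu_of H u0 - Hu_along H u0 t) / Bfun H u0 t) 0 x).
Definition u_eps (H : R -> R -> R -> R) (u0 : R -> R) (eps x : R) : R :=
  u0 x - (mu_of H u0 / Rabs (mu_of H u0)) * eps * rho_of H u0 x.

(* Main.v *)
Require Import Defs.
From Stdlib Require Import Reals.
From Coquelicot Require Import Coquelicot.
From Stdlib Require Import Lra Lia Classical ClassicalEpsilon List.
Open Scope R_scope.
Require Import Defs.

Lemma cont3_eps (F : R -> R -> R -> R) x0 p0 u0 :
  continuous (fun q : R * R * R => F (fst (fst q)) (snd (fst q)) (snd q)) ((x0, p0), u0) ->
  forall eps, 0 < eps -> exists d, 0 < d /\ forall x p u,
    Rabs (x - x0) < d -> Rabs (p - p0) < d -> Rabs (u - u0) < d ->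
    Rabs (F x p u - F x0 p0 u0) < eps.
Proof.
  intros Hc eps Heps.
  destruct (proj1 (filterlim_locally _ _) Hc (mkposreal eps Heps)) as [d Hd].
  exists d; split; [apply cond_pos|].
  intros x p u H1 H2 H3.
  specialize (Hd ((x,p),u)).
  simpl in Hd. apply Hd.
  repeat split; assumption.
Qed.

Lemma cR_plus (f g : R -> R) x : continuous f x -> continuous g x -> continuous (fun y => f y + g y) x.
Proof. intros; apply (continuous_plus (U := R_UniformSpace) (K := R_AbsRing) (V := R_NormedModule) f g x); auto. Qed.
Lemma cR_minus (f g : R -> R) x : continuous f x -> continuous g x -> continuous (fun y => f y - g y) x.
Proof. intros; apply (continuous_minus (U := R_UniformSpace) (K := R_AbsRing) (V := R_NormedModule) f g x); auto. Qed.
Lemma cR_mult (f g : R -> R) x : continuous f x -> continuous g x -> continuous (fun y => f y * g y) x.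
Proof. intros; apply (continuous_mult (U := R_UniformSpace) (K := R_AbsRing) f g x); auto. Qed.
Lemma cR_opp (f : R -> R) x : continuous f x -> continuous (fun y => - f y) x.
Proof. intros; apply (continuous_opp (U := R_UniformSpace) (K := R_AbsRing) (V := R_NormedModule) f x); auto. Qed.
Lemma cR_comp (f g : R -> R) x : continuous f x -> continuous g (f x) -> continuous (fun y => g (f y)) x.
Proof. intros; apply (continuous_comp (U := R_UniformSpace) (V := R_UniformSpace) (W := R_UniformSpace) f g x); auto. Qed.
Lemma cR_const (c : R) x : continuous (fun _ : R => c) x.
Proof. apply (continuous_const (U := R_UniformSpace) (V := R_UniformSpace)). Qed.
Lemma cR_id x : continuous (fun y : R => y) x.
Proof. apply (continuous_id (U := R_UniformSpace)). Qed.
Lemma cR_ext (f g : R -> R) x : (forall y, f y = g y) -> continuous f x -> continuous g x.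
Proof. intros; apply (continuous_ext (T := R_UniformSpace) (U := R_UniformSpace) f g x); auto. Qed.
Lemma cR_inv (f : R -> R) x : continuous f x -> f x <> 0 -> continuous (fun y => / f y) x.
Proof.
  intros Hc Hn. apply continuity_pt_filterlim.
  apply (continuity_pt_inv f x); [apply continuity_pt_filterlim; exact Hc| exact Hn].
Qed.
Lemma cR_exp (f : R -> R) x : continuous f x -> continuous (fun y => exp (f y)) x.
Proof.
  intros Hc. apply cR_comp; auto. apply continuity_pt_filterlim.
  apply derivable_continuous_pt, derivable_pt_exp.
Qed.
Lemma cR_der (f : R -> R) x : ex_derive f x -> continuous f x.
Proof. intro H. apply (ex_derive_continuous (K := R_AbsRing) (V := R_NormedModule)); auto. Qed.
Lemma cR_eps (f : R -> R) x : continuous f x -> forall eps, 0 < eps -> exists d, 0 < d /\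
  forall y, Rabs (y - x) < d -> Rabs (f y - f x) < eps.
Proof.
  intros Hc eps He. apply continuity_pt_filterlim in Hc.
  destruct (Hc eps He) as [d [Hd H]].
  exists d; split; auto. intros y Hy.
  destruct (Req_dec y x) as [->|Hne].
  - rewrite Rminus_eq_0, Rabs_R0; auto.
  - apply (H y). split; [split; [exact I| intro E; apply Hne; auto]| exact Hy].
Qed.
Lemma is_derive_eq (f : R -> R) (x l l' : R) : is_derive f x l -> l = l' -> is_derive f x l'.
Proof. intros H ->; exact H. Qed.
Lemma dR_comp (f g : R -> R) x df dg : is_derive f (g x) df -> is_derive g x dg ->
  is_derive (fun y => f (g y)) x (dg * df).
Proof. intros; apply (is_derive_comp (K := R_AbsRing) (V := R_NormedModule) f g x df dg); auto. Qed.
Lemma dR_plus (f g : R -> R) x df dg : is_derive f x df -> is_derive g x dg ->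
  is_derive (fun y => f y + g y) x (df + dg).
Proof. intros; apply (is_derive_plus (K := R_AbsRing) (V := R_NormedModule) f g x df dg); auto. Qed.
Lemma dR_minus (f g : R -> R) x df dg : is_derive f x df -> is_derive g x dg ->
  is_derive (fun y => f y - g y) x (df - dg).
Proof. intros; apply (is_derive_minus (K := R_AbsRing) (V := R_NormedModule) f g x df dg); auto. Qed.
Lemma dR_mult (f g : R -> R) x df dg : is_derive f x df -> is_derive g x dg ->
  is_derive (fun y => f y * g y) x (df * g x + f x * dg).
Proof. intros; apply (is_derive_mult (K := R_AbsRing) f g x df dg); auto. intros; apply Rmult_comm. Qed.
Lemma dR_opp (f : R -> R) x df : is_derive f x df -> is_derive (fun y => - f y) x (- df).
Proof. intros; apply (is_derive_opp (K := R_AbsRing) (V := R_NormedModule) f x df); auto. Qed.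
Lemma dR_ext (f g : R -> R) x l : (forall t, f t = g t) -> is_derive f x l -> is_derive g x l.
Proof. intros; apply (is_derive_ext (K := R_AbsRing) (V := R_NormedModule) f g x l); auto. Qed.
Lemma dR_const (c : R) x : is_derive (fun _ => c) x 0.
Proof. apply (is_derive_const (K := R_AbsRing) (V := R_NormedModule)). Qed.
Lemma dR_id x : is_derive (fun y : R => y) x 1.
Proof. apply (is_derive_id (K := R_AbsRing)). Qed.

Definition NoMax (G : R -> R) (al be : R) : Prop :=
  forall a b c, al < a -> a < b -> b < c -> c < be -> G b < Rmax (G a) (G c).

Lemma B3 (G : R -> R) al be x0 :
  NoMax G al be -> al < x0 -> x0 < be ->
  (exists h1, 0 < h1 /\ forall h, 0 < h < h1 -> G x0 < G (x0 + h)) ->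
  forall a b, x0 <= a -> a < b -> b < be -> G a < G b.
Proof.
  intros NM H1 H2 [h1 [Hh1 Hh]] a b Ha Hab Hb.
  assert (Hx0b : G x0 < G b).
  { destruct (Rle_or_lt (G b) (G x0)) as [Hle|Hlt]; [|exact Hlt].
    exfalso.
    set (t := Rmin (h1/2) ((b - x0)/2)).
    assert (Ht0 : 0 < t) by (unfold t; apply Rmin_pos; lra).
    assert (Ht1 : t < h1) by (unfold t; pose proof (Rmin_l (h1/2) ((b-x0)/2)); lra).
    assert (Ht2 : t < b - x0) by (unfold t; pose proof (Rmin_r (h1/2) ((b-x0)/2)); lra).
    pose proof (Hh t (conj Ht0 Ht1)) as Hg.
    pose proof (NM x0 (x0 + t) b H1 ltac:(lra) ltac:(lra) Hb) as Hm.
    unfold Rmax in Hm; destruct (Rle_dec (G x0) (G b)); lra. }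
  destruct (Req_dec a x0) as [->|Hne]; [exact Hx0b|].
  pose proof (NM x0 a b H1 ltac:(lra) Hab Hb) as Hm.
  unfold Rmax in Hm; destruct (Rle_dec (G x0) (G b)); lra.
Qed.

Lemma NoMax_refl (G : R -> R) al be :
  NoMax G al be -> NoMax (fun y => G (- y)) (- be) (- al).
Proof.
  intros NM a b c H1 H2 H3 H4.
  pose proof (NM (-c) (-b) (-a) ltac:(lra) ltac:(lra) ltac:(lra) ltac:(lra)) as Hm.
  rewrite Rmax_comm; exact Hm.
Qed.

Lemma B3' (G : R -> R) al be x0 :
  NoMax G al be -> al < x0 -> x0 < be ->
  (exists h1, 0 < h1 /\ forall h, 0 < h < h1 -> G (x0 + h) < G x0) ->
  forall a b, al < a -> a < b -> b <= x0 -> G b < G a.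
Proof.
  intros NM H1 H2 [h1 [Hh1 Hh]] a b Ha Hab Hb.
  destruct (Req_dec b x0) as [Hbe|Hne].
  - subst b.
    set (t := Rmin (h1/2) ((be - x0)/2)).
    assert (Ht0 : 0 < t) by (unfold t; apply Rmin_pos; lra).
    assert (Ht1 : t < h1) by (unfold t; pose proof (Rmin_l (h1/2) ((be-x0)/2)); lra).
    assert (Ht2 : t < be - x0) by (unfold t; pose proof (Rmin_r (h1/2) ((be-x0)/2)); lra).
    pose proof (Hh t (conj Ht0 Ht1)) as Hg.
    pose proof (NM a x0 (x0 + t) Ha Hab ltac:(lra) ltac:(lra)) as Hm.
    unfold Rmax in Hm; destruct (Rle_dec (G a) (G (x0+t))); lra.
  - assert (Hb0 : G b > G x0).
    { destruct (Rle_or_lt (G b) (G x0)) as [Hle|Hlt]; [|exact Hlt].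
      exfalso.
      set (t := Rmin (h1/2) ((be - x0)/2)).
      assert (Ht0 : 0 < t) by (unfold t; apply Rmin_pos; lra).
      assert (Ht1 : t < h1) by (unfold t; pose proof (Rmin_l (h1/2) ((be-x0)/2)); lra).
      assert (Ht2 : t < be - x0) by (unfold t; pose proof (Rmin_r (h1/2) ((be-x0)/2)); lra).
      pose proof (Hh t (conj Ht0 Ht1)) as Hg.
      assert (Hb' : al < b) by lra.
      pose proof (NM b x0 (x0 + t) Hb' ltac:(lra) ltac:(lra) ltac:(lra)) as Hm.
      unfold Rmax in Hm; destruct (Rle_dec (G b) (G (x0+t))); lra. }
    assert (Hbx : b < x0) by lra.
    pose proof (NM a b x0 Ha Hab Hbx H2) as Hm.
    unfold Rmax in Hm; destruct (Rle_dec (G a) (G x0)); lra.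
Qed.

Lemma par_derive q k c y :
  is_derive (fun y => q * y + k * (y - c) ^ 2) y (q + 2 * k * (y - c)).
Proof. auto_derive; [exact I| ring]. Qed.

Lemma par_C1 q k c : C1 (fun y => q * y + k * (y - c) ^ 2).
Proof.
  split.
  - intro x; eexists; apply par_derive.
  - intro x.
    apply continuous_ext with (f := fun y => q + 2 * k * (y - c)).
    + intro y; symmetry; apply is_derive_unique, par_derive.
    + apply (ex_derive_continuous (K := R_AbsRing) (V := R_NormedModule)). auto_derive; exact I.
Qed.

Lemma par_Derive q k c y :
  Derive (fun y => q * y + k * (y - c) ^ 2) y = q + 2 * k * (y - c).
Proof. apply is_derive_unique, par_derive. Qed.

Lemma loc_max_of_int (G : R -> R) a b m :
  a < m < b -> (forall y, a <= y <= b -> G y <= G m) -> local_max_at G m.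
Proof.
  intros [H1 H2] H. exists (Rmin (m - a) (b - m)); split.
  - apply Rmin_pos; lra.
  - intros y Hy. apply H.
    pose proof (Rmin_l (m-a) (b-m)); pose proof (Rmin_r (m-a) (b-m)).
    apply Rabs_def2 in Hy. lra.
Qed.

Lemma loc_min_of_int (G : R -> R) a b m :
  a < m < b -> (forall y, a <= y <= b -> G m <= G y) -> local_min_at G m.
Proof.
  intros [H1 H2] H. exists (Rmin (m - a) (b - m)); split.
  - apply Rmin_pos; lra.
  - intros y Hy. apply H.
    pose proof (Rmin_l (m-a) (b-m)); pose proof (Rmin_r (m-a) (b-m)).
    apply Rabs_def2 in Hy. lra.
Qed.

Lemma EVT_max (G : R -> R) a b :
  a <= b -> (forall x, continuous G x) ->
  exists m, a <= m <= b /\ forall y, a <= y <= b -> G y <= G m.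
Proof.
  intros Hab Hc.
  destruct (continuity_ab_maj G a b Hab) as [m [Hm1 Hm2]].
  - intros c _. apply continuity_pt_filterlim, Hc.
  - exists m; split; auto.
Qed.

Lemma EVT_min (G : R -> R) a b :
  a <= b -> (forall x, continuous G x) ->
  exists m, a <= m <= b /\ forall y, a <= y <= b -> G m <= G y.
Proof.
  intros Hab Hc.
  destruct (continuity_ab_min G a b Hab) as [m [Hm1 Hm2]].
  - intros c _. apply continuity_pt_filterlim, Hc.
  - exists m; split; auto.
Qed.

Record Setting (u : R -> R) (K Kd : R -> R -> R) : Prop := {
  S_ucont : forall x, continuous u x;
  S_sub : forall phi x0, C1 phi -> local_max_at (fun y => u y - phi y) x0 -> K x0 (Derive phi x0) <= 0;
  S_sup : forall phi x0, C1 phi -> local_min_at (fun y => u y - phi y) x0 -> 0 <= K x0 (Derive phi x0);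
  S_Kcont : forall y q eps, 0 < eps -> exists d, 0 < d /\ forall y' q',
      Rabs (y' - y) < d -> Rabs (q' - q) < d -> Rabs (K y' q' - K y q) < eps;
  S_Kdcont : forall y q eps, 0 < eps -> exists d, 0 < d /\ forall y' q',
      Rabs (y' - y) < d -> Rabs (q' - q) < d -> Rabs (Kd y' q' - Kd y q) < eps;
  S_Kder : forall y q, is_derive (K y) q (Kd y q);
  S_Kinc : forall y a b, a < b -> Kd y a < Kd y b;
  S_coer : forall x0, exists d P, 0 < d /\ forall y q,
      Rabs (y - x0) < d -> P <= Rabs q -> 0 < K y q
}.

Lemma lin_cont u q : (forall x, continuous u x) -> forall x, continuous (fun y => u y - q * y) x.
Proof.
  intros Hu x. apply (continuous_minus u (fun y => q * y)); [apply Hu|].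
  apply (ex_derive_continuous (K := R_AbsRing) (V := R_NormedModule)). auto_derive; exact I.
Qed.

Lemma S_par_max u K Kd (S : Setting u K Kd) q k c a b m :
  a < m < b ->
  (forall y, a <= y <= b -> u y - (q * y + k * (y - c) ^ 2) <= u m - (q * m + k * (m - c) ^ 2)) ->
  K m (q + 2 * k * (m - c)) <= 0.
Proof.
  intros Hm H. rewrite <- par_Derive.
  apply (S_sub _ _ _ S); [apply par_C1|].
  apply (loc_max_of_int _ a b m Hm H).
Qed.

Lemma S_par_min u K Kd (S : Setting u K Kd) q k c a b m :
  a < m < b ->
  (forall y, a <= y <= b -> u m - (q * m + k * (m - c) ^ 2) <= u y - (q * y + k * (y - c) ^ 2)) ->
  0 <= K m (q + 2 * k * (m - c)).
Proof.
  intros Hm H. rewrite <- par_Derive.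
  apply (S_sup _ _ _ S); [apply par_C1|].
  apply (loc_min_of_int _ a b m Hm H).
Qed.

Lemma S_lin_max u K Kd (S : Setting u K Kd) q a b m :
  a < m < b ->
  (forall y, a <= y <= b -> u y - q * y <= u m - q * m) -> K m q <= 0.
Proof.
  intros Hm H.
  assert (HH : K m (q + 2 * 0 * (m - 0)) <= 0).
  { apply (S_par_max u K Kd S q 0 0 a b m Hm).
    intros y Hy; specialize (H y Hy). lra. }
  replace (q + 2 * 0 * (m - 0)) with q in HH by ring. exact HH.
Qed.

Lemma S_lin_min u K Kd (S : Setting u K Kd) q a b m :
  a < m < b ->
  (forall y, a <= y <= b -> u m - q * m <= u y - q * y) -> 0 <= K m q.
Proof.
  intros Hm H.
  assert (HH : 0 <= K m (q + 2 * 0 * (m - 0))).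
  { apply (S_par_min u K Kd S q 0 0 a b m Hm).
    intros y Hy; specialize (H y Hy). lra. }
  replace (q + 2 * 0 * (m - 0)) with q in HH by ring. exact HH.
Qed.

Lemma S_QC u K Kd (S : Setting u K Kd) q al be :
  (forall y, al < y < be -> 0 < K y q) -> NoMax (fun y => u y - q * y) al be.
Proof.
  intros Hpos a b c H1 H2 H3 H4.
  destruct (Rlt_or_le (u b - q * b) (Rmax (u a - q * a) (u c - q * c))) as [Hl|Hge]; [exact Hl|].
  exfalso.
  destruct (EVT_max (fun y => u y - q * y) a c ltac:(lra) (lin_cont u q (S_ucont _ _ _ S))) as [m [Hm Hmax]].
  simpl in Hmax.
  pose proof (Rmax_l (u a - q * a) (u c - q * c)); pose proof (Rmax_r (u a - q * a) (u c - q * c)).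
  destruct (Req_dec m a) as [->|Hma]; [|destruct (Req_dec m c) as [->|Hmc]].
  - assert (Hb : forall y, a <= y <= c -> u y - q * y <= u b - q * b).
    { intros y Hy; specialize (Hmax y Hy). lra. }
    pose proof (S_lin_max u K Kd S q a c b ltac:(lra) Hb). specialize (Hpos b ltac:(lra)). lra.
  - assert (Hb : forall y, a <= y <= c -> u y - q * y <= u b - q * b).
    { intros y Hy; specialize (Hmax y Hy). lra. }
    pose proof (S_lin_max u K Kd S q a c b ltac:(lra) Hb). specialize (Hpos b ltac:(lra)). lra.
  - pose proof (S_lin_max u K Kd S q a c m ltac:(lra) Hmax). specialize (Hpos m ltac:(lra)). lra.
Qed.

Lemma S_QCc u K Kd (S : Setting u K Kd) q al be :
  (forall y, al < y < be -> K y q < 0) -> NoMax (fun y => - (u y - q * y)) al be.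
Proof.
  intros Hneg a b c H1 H2 H3 H4.
  destruct (Rlt_or_le (- (u b - q * b)) (Rmax (- (u a - q * a)) (- (u c - q * c)))) as [Hl|Hge]; [exact Hl|].
  exfalso.
  destruct (EVT_min (fun y => u y - q * y) a c ltac:(lra) (lin_cont u q (S_ucont _ _ _ S))) as [m [Hm Hmin]].
  simpl in Hmin.
  pose proof (Rmax_l (- (u a - q * a)) (- (u c - q * c))); pose proof (Rmax_r (- (u a - q * a)) (- (u c - q * c))).
  destruct (Req_dec m a) as [->|Hma]; [|destruct (Req_dec m c) as [->|Hmc]].
  - assert (Hb : forall y, a <= y <= c -> u b - q * b <= u y - q * y).
    { intros y Hy; specialize (Hmin y Hy). lra. }
    pose proof (S_lin_min u K Kd S q a c b ltac:(lra) Hb). specialize (Hneg b ltac:(lra)). lra.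
  - assert (Hb : forall y, a <= y <= c -> u b - q * b <= u y - q * y).
    { intros y Hy; specialize (Hmin y Hy). lra. }
    pose proof (S_lin_min u K Kd S q a c b ltac:(lra) Hb). specialize (Hneg b ltac:(lra)). lra.
  - pose proof (S_lin_min u K Kd S q a c m ltac:(lra) Hmin). specialize (Hneg m ltac:(lra)). lra.
Qed.

Lemma slope_bounds (f df : R -> R) :
  (forall x, is_derive f x (df x)) -> (forall a b, a < b -> df a < df b) ->
  forall a b, a < b -> df a < (f b - f a) / (b - a) < df b.
Proof.
  intros Hd Hi.
  assert (Hw : forall a b, a < b -> df a <= (f b - f a) / (b - a) <= df b).
  { intros a b Hab.
    destruct (MVT_gen f a b df) as [c [Hc Heq]].
    - intros x _; apply Hd.
    - intros x _. apply continuity_pt_filterlim.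
      apply (ex_derive_continuous (K := R_AbsRing) (V := R_NormedModule)).
      eexists; apply Hd.
    - rewrite Rmin_left in Hc by lra. rewrite Rmax_right in Hc by lra.
      rewrite Heq. replace (df c * (b - a) / (b - a)) with (df c) by (field; lra).
      destruct (Req_dec c a) as [->|Hca]; [split; [lra|]|].
      + destruct (Req_dec a b) as [->|]; [lra|]. left; apply Hi; lra.
      + destruct (Req_dec c b) as [->|Hcb].
        * split; [left; apply Hi; lra| lra].
        * split; left; apply Hi; lra. }
  intros a b Hab.
  set (m := (a + b) / 2).
  pose proof (Hw a m ltac:(unfold m; lra)) as H1.
  pose proof (Hw m b ltac:(unfold m; lra)) as H2.
  pose proof (Hi a m ltac:(unfold m; lra)) as H3.
  pose proof (Hi m b ltac:(unfold m; lra)) as H4.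
  assert (E : (f b - f a) / (b - a) = ((f m - f a) / (m - a) + (f b - f m) / (b - m)) / 2).
  { unfold m; field; lra. }
  rewrite E. lra.
Qed.


Lemma S_slope u K Kd (S : Setting u K Kd) y a b :
  a < b -> Kd y a < (K y b - K y a) / (b - a) < Kd y b.
Proof.
  apply (slope_bounds (K y) (Kd y)).
  - intro x; apply (S_Kder _ _ _ S).
  - intros; apply (S_Kinc _ _ _ S); auto.
Qed.

Lemma S_secant u K Kd (S : Setting u K Kd) y a b c :
  a < b -> b < c -> (K y b - K y a) / (b - a) < (K y c - K y b) / (c - b).
Proof.
  intros H1 H2.
  pose proof (S_slope u K Kd S y a b H1). pose proof (S_slope u K Kd S y b c H2). lra.
Qed.

Lemma S_between u K Kd (S : Setting u K Kd) y a q b :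
  a < q -> q < b -> K y a = 0 -> K y b = 0 -> K y q < 0.
Proof.
  intros H1 H2 Ha Hb.
  pose proof (S_secant u K Kd S y a q b H1 H2) as Hs.
  rewrite Ha, Hb in Hs.
  destruct (Rlt_or_le (K y q) 0) as [|Hge]; [assumption|exfalso].
  assert (0 <= (K y q - 0) / (q - a)) by (apply Rdiv_le_0_compat; lra).
  assert ((0 - K y q) / (b - q) <= 0).
  { unfold Rdiv. replace (0 - K y q) with (- K y q) by ring.
    rewrite Ropp_mult_distr_l_reverse.
    assert (0 <= K y q * / (b - q)) by (apply Rmult_le_pos; [lra|left; apply Rinv_0_lt_compat; lra]).
    lra. }
  lra.
Qed.

Lemma S_three u K Kd (S : Setting u K Kd) y a b c :
  a < b -> b < c -> K y a = 0 -> K y b = 0 -> K y c = 0 -> False.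
Proof.
  intros H1 H2 Ha Hb Hc.
  pose proof (S_between u K Kd S y a b c H1 H2 Ha Hc). lra.
Qed.

Lemma S_root_signs u K Kd (S : Setting u K Kd) y a b :
  a < b -> K y a = 0 -> K y b = 0 -> Kd y a < 0 /\ 0 < Kd y b.
Proof.
  intros H Ha Hb. pose proof (S_slope u K Kd S y a b H) as Hs.
  rewrite Ha, Hb in Hs. replace ((0 - 0) / (b - a)) with 0 in Hs by (field; lra). lra.
Qed.

Definition RD (u : R -> R) x0 r := forall eps, 0 < eps -> exists d, 0 < d /\
  forall h, 0 < h < d -> Rabs ((u (x0 + h) - u x0) / h - r) < eps.
Definition LD (u : R -> R) x0 l := forall eps, 0 < eps -> exists d, 0 < d /\
  forall h, 0 < h < d -> Rabs ((u x0 - u (x0 - h)) / h - l) < eps.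

Lemma Dq_gt (u : R -> R) x0 q h : 0 < h ->
  (q < (u (x0 + h) - u x0) / h <-> u x0 - q * x0 < u (x0 + h) - q * (x0 + h)).
Proof.
  intro Hh. split; intro H.
  - apply (Rmult_lt_compat_r h) in H; [|lra].
    unfold Rdiv in H. rewrite Rmult_assoc, Rinv_l in H by lra. lra.
  - apply (Rmult_lt_reg_r h); [lra|]. unfold Rdiv. rewrite Rmult_assoc, Rinv_l by lra. lra.
Qed.

Lemma Dq_lt (u : R -> R) x0 q h : 0 < h ->
  ((u (x0 + h) - u x0) / h < q <-> u (x0 + h) - q * (x0 + h) < u x0 - q * x0).
Proof.
  intro Hh. split; intro H.
  - apply (Rmult_lt_compat_r h) in H; [|lra].
    unfold Rdiv in H. rewrite Rmult_assoc, Rinv_l in H by lra. lra.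
  - apply (Rmult_lt_reg_r h); [lra|]. unfold Rdiv. rewrite Rmult_assoc, Rinv_l by lra. lra.
Qed.

Lemma K_pos_near u K Kd (S : Setting u K Kd) x0 q :
  0 < K x0 q -> exists d, 0 < d /\ forall y, Rabs (y - x0) < d -> 0 < K y q.
Proof.
  intro Hp. destruct (S_Kcont _ _ _ S x0 q (K x0 q) Hp) as [d [Hd H]].
  exists d; split; auto. intros y Hy.
  specialize (H y q Hy ltac:(rewrite Rminus_eq_0, Rabs_R0; lra)).
  apply Rabs_def2 in H. lra.
Qed.

Lemma K_neg_near u K Kd (S : Setting u K Kd) x0 q :
  K x0 q < 0 -> exists d, 0 < d /\ forall y, Rabs (y - x0) < d -> K y q < 0.
Proof.
  intro Hp. destruct (S_Kcont _ _ _ S x0 q (- K x0 q) ltac:(lra)) as [d [Hd H]].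
  exists d; split; auto. intros y Hy.
  specialize (H y q Hy ltac:(rewrite Rminus_eq_0, Rabs_R0; lra)).
  apply Rabs_def2 in H. lra.
Qed.

Lemma abs_lt_interval y x0 d : Rabs (y - x0) < d <-> x0 - d < y < x0 + d.
Proof.
  split; intro H.
  - apply Rabs_def2 in H; lra.
  - apply Rabs_def1; lra.
Qed.

Lemma S_osc u K Kd (S : Setting u K Kd) x0 q :
  (forall d, 0 < d -> exists h, 0 < h < d /\ q < (u (x0 + h) - u x0) / h) ->
  (forall d, 0 < d -> exists h, 0 < h < d /\ (u (x0 + h) - u x0) / h < q) ->
  K x0 q = 0.
Proof.
  intros Hup Hdn.
  destruct (Rtotal_order (K x0 q) 0) as [Hn|[He|Hp]]; [exfalso| exact He| exfalso].
  - destruct (K_neg_near u K Kd S x0 q Hn) as [d [Hd Hnear]].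
    assert (NM := S_QCc u K Kd S q (x0 - d) (x0 + d) ltac:(intros y Hy; apply Hnear, abs_lt_interval; lra)).
    destruct (Hup d Hd) as [h2 [Hh2 Hq2]].
    destruct (Hdn h2 ltac:(lra)) as [h1 [Hh1 Hq1]].
    apply Dq_gt in Hq2; [|lra]. apply Dq_lt in Hq1; [|lra].
    pose proof (NM x0 (x0 + h1) (x0 + h2) ltac:(lra) ltac:(lra) ltac:(lra) ltac:(lra)) as Hm.
    unfold Rmax in Hm. destruct Rle_dec in Hm; lra.
  - destruct (K_pos_near u K Kd S x0 q Hp) as [d [Hd Hnear]].
    assert (NM := S_QC u K Kd S q (x0 - d) (x0 + d) ltac:(intros y Hy; apply Hnear, abs_lt_interval; lra)).
    destruct (Hdn d Hd) as [h2 [Hh2 Hq2]].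
    destruct (Hup h2 ltac:(lra)) as [h1 [Hh1 Hq1]].
    apply Dq_lt in Hq2; [|lra]. apply Dq_gt in Hq1; [|lra].
    pose proof (NM x0 (x0 + h1) (x0 + h2) ltac:(lra) ltac:(lra) ltac:(lra) ltac:(lra)) as Hm.
    unfold Rmax in Hm. destruct Rle_dec in Hm; lra.
Qed.

Lemma not_ev_le (D : R -> R) q :
  ~ (exists d1, 0 < d1 /\ forall h, 0 < h < d1 -> D h <= q) ->
  forall d, 0 < d -> exists h, 0 < h < d /\ q < D h.
Proof.
  intros Hn d Hd. apply NNPP; intro Hc. apply Hn. exists d; split; auto.
  intros h Hh. apply Rnot_lt_le. intro Hl. apply Hc. exists h; auto.
Qed.

Lemma not_ev_ge (D : R -> R) q :
  ~ (exists d1, 0 < d1 /\ forall h, 0 < h < d1 -> q <= D h) ->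
  forall d, 0 < d -> exists h, 0 < h < d /\ D h < q.
Proof.
  intros Hn d Hd. apply NNPP; intro Hc. apply Hn. exists d; split; auto.
  intros h Hh. apply Rnot_lt_le. intro Hl. apply Hc. exists h; auto.
Qed.

Lemma S_Dupper u K Kd (S : Setting u K Kd) x0 :
  exists M d, 0 < d /\ forall h, 0 < h < d -> (u (x0 + h) - u x0) / h <= M.
Proof.
  destruct (S_coer _ _ _ S x0) as [d [P [Hd Hc]]].
  set (Dl := u (x0 + d / 2) - u x0).
  set (q := Rabs P + 2 + 2 * Rabs Dl / d).
  assert (Hq0 : Rabs P + 2 <= q).
  { unfold q. assert (0 <= 2 * Rabs Dl / d) by (apply Rdiv_le_0_compat; [pose proof (Rabs_pos Dl); lra|lra]). lra. }
  exists q.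
  destruct (classic (exists d1, 0 < d1 /\ forall h, 0 < h < d1 -> (u (x0 + h) - u x0) / h <= q)) as [Hy|Hn]; [exact Hy|].
  exfalso.
  pose proof (not_ev_le _ _ Hn) as Hup.
  assert (Hpos : forall y, x0 - d < y < x0 + d -> 0 < K y q /\ 0 < K y (q - 1)).
  { intros y Hy. pose proof (Rle_abs P). pose proof (Rabs_pos P).
    split; apply Hc; try (apply abs_lt_interval; lra);
      rewrite Rabs_right; lra. }
  destruct (classic (forall d1, 0 < d1 -> exists h, 0 < h < d1 /\ (u (x0 + h) - u x0) / h < q)) as [Hdn|Hndn].
  - pose proof (S_osc u K Kd S x0 q Hup Hdn). pose proof (proj1 (Hpos x0 ltac:(lra))). lra.
  - assert (Hev : exists d1, 0 < d1 /\ forall h, 0 < h < d1 -> q <= (u (x0 + h) - u x0) / h).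
    { apply NNPP; intro H. apply Hndn. apply not_ev_ge. exact H. }
    destruct Hev as [d1 [Hd1 Hev]].
    assert (NM := S_QC u K Kd S (q - 1) (x0 - d) (x0 + d) ltac:(intros y Hy; apply (proj2 (Hpos y Hy)))).
    assert (Hinc := B3 _ _ _ x0 NM ltac:(lra) ltac:(lra)).
    assert (Hgo : exists h1, 0 < h1 /\ forall h, 0 < h < h1 ->
        u x0 - (q - 1) * x0 < u (x0 + h) - (q - 1) * (x0 + h)).
    { exists d1; split; auto. intros h Hh. apply Dq_gt; [lra|]. specialize (Hev h Hh). lra. }
    specialize (Hinc Hgo x0 (x0 + d / 2) ltac:(lra) ltac:(lra) ltac:(lra)).
    simpl in Hinc.
    assert (E : (q - 1) * (d / 2) = (Rabs P + 1) * (d / 2) + Rabs Dl) by (unfold q; field; lra).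
    assert (0 < (Rabs P + 1) * (d / 2)) by (apply Rmult_lt_0_compat; [pose proof (Rabs_pos P); lra|lra]).
    pose proof (Rle_abs Dl). unfold Dl in *.
    assert (E2 : (q - 1) * (x0 + d / 2) = (q - 1) * x0 + (q - 1) * (d / 2)) by ring.
    lra.
Qed.

Lemma S_Dlower u K Kd (S : Setting u K Kd) x0 :
  exists m d, 0 < d /\ forall h, 0 < h < d -> m <= (u (x0 + h) - u x0) / h.
Proof.
  destruct (S_coer _ _ _ S x0) as [d [P [Hd Hc]]].
  set (Dl := u x0 - u (x0 - d / 2)).
  set (q := - (Rabs P + 2 + 2 * Rabs Dl / d)).
  assert (Hq0 : q <= - (Rabs P + 2)).
  { unfold q. assert (0 <= 2 * Rabs Dl / d) by (apply Rdiv_le_0_compat; [pose proof (Rabs_pos Dl); lra|lra]). lra. }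
  exists q.
  destruct (classic (exists d1, 0 < d1 /\ forall h, 0 < h < d1 -> q <= (u (x0 + h) - u x0) / h)) as [Hy|Hn]; [exact Hy|].
  exfalso.
  pose proof (not_ev_ge _ _ Hn) as Hdn.
  assert (Hpos : forall y, x0 - d < y < x0 + d -> 0 < K y q /\ 0 < K y (q + 1)).
  { intros y Hy. pose proof (Rle_abs P). pose proof (Rabs_pos P).
    split; apply Hc; try (apply abs_lt_interval; lra);
      rewrite Rabs_left; lra. }
  destruct (classic (forall d1, 0 < d1 -> exists h, 0 < h < d1 /\ q < (u (x0 + h) - u x0) / h)) as [Hup|Hnup].
  - pose proof (S_osc u K Kd S x0 q Hup Hdn). pose proof (proj1 (Hpos x0 ltac:(lra))). lra.
  - assert (Hev : exists d1, 0 < d1 /\ forall h, 0 < h < d1 -> (u (x0 + h) - u x0) / h <= q).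
    { apply NNPP; intro H. apply Hnup. apply not_ev_le. exact H. }
    destruct Hev as [d1 [Hd1 Hev]].
    assert (NM := S_QC u K Kd S (q + 1) (x0 - d) (x0 + d) ltac:(intros y Hy; apply (proj2 (Hpos y Hy)))).
    assert (Hdec := B3' _ _ _ x0 NM ltac:(lra) ltac:(lra)).
    assert (Hgo : exists h1, 0 < h1 /\ forall h, 0 < h < h1 ->
        u (x0 + h) - (q + 1) * (x0 + h) < u x0 - (q + 1) * x0).
    { exists d1; split; auto. intros h Hh. apply Dq_lt; [lra|]. specialize (Hev h Hh). lra. }
    specialize (Hdec Hgo (x0 - d / 2) x0 ltac:(lra) ltac:(lra) ltac:(lra)).
    simpl in Hdec.
    assert (E : (q + 1) * (d / 2) = - ((Rabs P + 1) * (d / 2) + Rabs Dl)) by (unfold q; field; lra).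
    assert (0 < (Rabs P + 1) * (d / 2)) by (apply Rmult_lt_0_compat; [pose proof (Rabs_pos P); lra|lra]).
    pose proof (Rle_abs Dl). pose proof (Rle_abs (- Dl)). rewrite Rabs_Ropp in *. unfold Dl in *.
    assert (E2 : (q + 1) * (x0 - d / 2) = (q + 1) * x0 - (q + 1) * (d / 2)) by ring.
    lra.
Qed.

Lemma S_RD_exists u K Kd (S : Setting u K Kd) x0 : exists r, RD u x0 r.
Proof.
  destruct (S_Dupper u K Kd S x0) as [M [dM [HdM HM]]].
  destruct (S_Dlower u K Kd S x0) as [m [dm [Hdm Hm]]].
  set (D := fun h => (u (x0 + h) - u x0) / h).
  set (A := fun q => exists d, 0 < d /\ forall h, 0 < h < d -> q <= D h).
  assert (HbA : bound A).
  { exists M. intros q [d [Hd Hq]].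
    set (h := Rmin (d / 2) (dM / 2)).
    assert (0 < h) by (unfold h; apply Rmin_pos; lra).
    pose proof (Rmin_l (d/2) (dM/2)); pose proof (Rmin_r (d/2) (dM/2)).
    specialize (Hq h ltac:(unfold h in *; lra)). specialize (HM h ltac:(unfold h in *; lra)).
    unfold D in Hq. lra. }
  assert (HnA : exists q, A q) by (exists m, dm; split; auto).
  destruct (completeness A HbA HnA) as [r [Hub Hlub]].
  exists r. intros eps Heps.
  assert (Hlo : exists d, 0 < d /\ forall h, 0 < h < d -> r - eps / 2 <= D h).
  { apply NNPP; intro Hn.
    assert (Hub' : is_upper_bound A (r - eps / 2)).
    { intros q [d [Hd Hq]]. apply Rnot_lt_le; intro Hlt. apply Hn.
      exists d; split; auto. intros h Hh. specialize (Hq h Hh). lra. }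
    specialize (Hlub _ Hub'). lra. }
  assert (Hhi : exists d, 0 < d /\ forall h, 0 < h < d -> D h <= r + eps / 2).
  { apply NNPP; intro Hn.
    pose proof (not_ev_le D _ Hn) as Hup.
    assert (Hroot : forall q, r < q < r + eps / 2 -> K x0 q = 0).
    { intros q Hq. apply (S_osc u K Kd S x0 q).
      - intros d Hd. destruct (Hup d Hd) as [h [Hh Hq']]. exists h; split; auto. unfold D in Hq'; lra.
      - apply not_ev_ge. intro HA. assert (A q) by exact HA.
        specialize (Hub q H). lra. }
    apply (S_three u K Kd S x0 (r + eps / 8) (r + eps / 4) (r + 3 * eps / 8)); try lra;
      apply Hroot; lra. }
  destruct Hlo as [d1 [Hd1 H1]]. destruct Hhi as [d2 [Hd2 H2]].
  exists (Rmin d1 d2); split; [apply Rmin_pos; auto|].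
  intros h Hh. pose proof (Rmin_l d1 d2); pose proof (Rmin_r d1 d2).
  specialize (H1 h ltac:(lra)). specialize (H2 h ltac:(lra)). unfold D in *.
  apply Rabs_def1; lra.
Qed.

Lemma C1_refl phi : C1 phi -> C1 (fun y => phi (- y)).
Proof.
  intros [Hd Hc]. split.
  - intro x. eexists. apply dR_comp; [apply Derive_correct, Hd| apply dR_opp, dR_id].
  - intro x. apply cR_ext with (f := fun y => - Derive phi (- y)).
    + intro y. symmetry. apply is_derive_unique.
      apply is_derive_eq with (l := -1 * Derive phi (- y)); [|ring].
      apply dR_comp; [apply Derive_correct, Hd| apply dR_opp, dR_id].
    + apply cR_opp. apply cR_comp; [apply cR_opp, cR_id| apply Hc].
Qed.

Lemma Derive_refl phi x : ex_derive phi (- x) -> Derive (fun y => phi (- y)) x = - Derive phi (- x).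
Proof.
  intro H. apply is_derive_unique.
  apply is_derive_eq with (l := -1 * Derive phi (- x)); [|ring].
  apply dR_comp; [apply Derive_correct, H| apply dR_opp, dR_id].
Qed.

Lemma Setting_refl u K Kd : Setting u K Kd ->
  Setting (fun y => u (- y)) (fun y q => K (- y) (- q)) (fun y q => - Kd (- y) (- q)).
Proof.
  intro S. constructor.
  - intro x. apply cR_comp; [apply cR_opp, cR_id| apply (S_ucont _ _ _ S)].
  - intros phi x0 Hphi [d [Hd Hm]].
    assert (Hpsi := C1_refl phi Hphi).
    pose proof (S_sub _ _ _ S (fun y => phi (- y)) (- x0) Hpsi) as HS.
    rewrite Derive_refl in HS by (apply (proj1 Hphi)).
    rewrite Ropp_involutive in HS. apply HS.
    exists d; split; auto. intros y Hy.
    specialize (Hm (- y) ltac:(rewrite <- Rabs_Ropp; replace (- (- y - x0)) with (y - - x0) by ring; exact Hy)).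
    simpl in Hm. rewrite !Ropp_involutive in Hm. rewrite Ropp_involutive. exact Hm.
  - intros phi x0 Hphi [d [Hd Hm]].
    assert (Hpsi := C1_refl phi Hphi).
    pose proof (S_sup _ _ _ S (fun y => phi (- y)) (- x0) Hpsi) as HS.
    rewrite Derive_refl in HS by (apply (proj1 Hphi)).
    rewrite Ropp_involutive in HS. apply HS.
    exists d; split; auto. intros y Hy.
    specialize (Hm (- y) ltac:(rewrite <- Rabs_Ropp; replace (- (- y - x0)) with (y - - x0) by ring; exact Hy)).
    simpl in Hm. rewrite !Ropp_involutive in Hm. rewrite Ropp_involutive. exact Hm.
  - intros y q eps He. destruct (S_Kcont _ _ _ S (- y) (- q) eps He) as [d [Hd H]].
    exists d; split; auto. intros y' q' H1 H2. apply H.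
    + replace (- y' - - y) with (- (y' - y)) by ring; rewrite Rabs_Ropp; auto.
    + replace (- q' - - q) with (- (q' - q)) by ring; rewrite Rabs_Ropp; auto.
  - intros y q eps He. destruct (S_Kdcont _ _ _ S (- y) (- q) eps He) as [d [Hd H]].
    exists d; split; auto. intros y' q' H1 H2.
    replace (- Kd (- y') (- q') - - Kd (- y) (- q)) with (- (Kd (- y') (- q') - Kd (- y) (- q))) by ring.
    rewrite Rabs_Ropp. apply H.
    + replace (- y' - - y) with (- (y' - y)) by ring; rewrite Rabs_Ropp; auto.
    + replace (- q' - - q) with (- (q' - q)) by ring; rewrite Rabs_Ropp; auto.
  - intros y q. apply is_derive_eq with (l := -1 * Kd (- y) (- q)); [|ring].
    apply (dR_comp (K (- y)) (fun q => - q)); [apply (S_Kder _ _ _ S)| apply dR_opp, dR_id].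
  - intros y a b Hab. pose proof (S_Kinc _ _ _ S (- y) (- b) (- a) ltac:(lra)). lra.
  - intro x0. destruct (S_coer _ _ _ S (- x0)) as [d [P [Hd H]]].
    exists d, P; split; auto. intros y q H1 H2. apply H.
    + replace (- y - - x0) with (- (y - x0)) by ring; rewrite Rabs_Ropp; auto.
    + rewrite Rabs_Ropp; auto.
Qed.

Lemma RD_bound (u : R -> R) x0 r e h : 0 < h ->
  Rabs ((u (x0 + h) - u x0) / h - r) < e ->
  u x0 + (r - e) * h < u (x0 + h) < u x0 + (r + e) * h.
Proof.
  intros Hh H. apply Rabs_def2 in H. destruct H as [H1 H2].
  assert (E : u (x0 + h) = u x0 + ((u (x0 + h) - u x0) / h) * h) by (field; lra).
  rewrite E. split.
  - apply Rplus_lt_compat_l. apply Rmult_lt_compat_r; lra.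
  - apply Rplus_lt_compat_l. apply Rmult_lt_compat_r; lra.
Qed.

Lemma S_RD_root u K Kd (S : Setting u K Kd) x0 r : RD u x0 r -> K x0 r = 0.
Proof.
  intro HR.
  destruct (Rtotal_order (K x0 r) 0) as [Hn|[He|Hp]]; [exfalso| exact He| exfalso].
  - destruct (S_Kcont _ _ _ S x0 r (- K x0 r) ltac:(lra)) as [d0 [Hd0 Hc]].
    set (e := d0 / 16).
    destruct (HR e ltac:(unfold e; lra)) as [d1 [Hd1 HD]].
    set (h := Rmin d1 d0 / 2).
    assert (Hh0 : 0 < h) by (unfold h; pose proof (Rmin_pos d1 d0 Hd1 Hd0); lra).
    assert (Hh1 : h < d1) by (unfold h; pose proof (Rmin_l d1 d0); lra).
    assert (Hh2 : h < d0) by (unfold h; pose proof (Rmin_r d1 d0); lra).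
    set (c := x0 + h / 2). set (k := - (8 * e / h)).
    set (G := fun y => u y - (r * y + k * (y - c) ^ 2)).
    destruct (EVT_min G x0 (x0 + h) ltac:(lra)) as [m [Hm Hmin]].
    { intro x. unfold G. apply cR_minus; [apply (S_ucont _ _ _ S)|].
      apply cR_der. eexists; apply par_derive. }
    pose proof (RD_bound u x0 r e h Hh0 (HD h ltac:(lra))) as B1.
    pose proof (RD_bound u x0 r e (h / 2) ltac:(lra) (HD (h / 2) ltac:(lra))) as B2.
    assert (Ekh : k * (h / 2) ^ 2 = - (2 * e * h)) by (unfold k; field; lra).
    assert (HGx0 : G c < G x0).
    { unfold G, c. replace (x0 - (x0 + h / 2)) with (- (h / 2)) by field.
      replace ((- (h / 2)) ^ 2) with ((h / 2) ^ 2) by ring.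
      replace (x0 + h / 2 - (x0 + h / 2)) with 0 by ring.
      assert (r * (x0 + h / 2) = r * x0 + r * (h / 2)) by field.
      assert (e * (h / 2) > 0) by (apply Rmult_lt_0_compat; unfold e; lra).
      assert ((r + e) * (h / 2) = r * (h / 2) + e * (h / 2)) by field.
      assert (e * h = 2 * (e * (h / 2))) by field. nra. }
    assert (HGx1 : G c < G (x0 + h)).
    { unfold G, c. replace (x0 + h - (x0 + h / 2)) with (h / 2) by field.
      replace (x0 + h / 2 - (x0 + h / 2)) with 0 by ring.
      assert (r * (x0 + h / 2) = r * x0 + r * (h / 2)) by field.
      assert (r * (x0 + h) = r * x0 + r * h) by field.
      assert (e * (h / 2) > 0) by (apply Rmult_lt_0_compat; unfold e; lra).
      assert ((r + e) * (h / 2) = r * (h / 2) + e * (h / 2)) by field.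
      assert ((r - e) * h = r * h - 2 * (e * (h / 2))) by field.
      assert (e * h = 2 * (e * (h / 2))) by field. nra. }
    assert (Hmi : x0 < m < x0 + h).
    { destruct Hm as [Hm1 Hm2]. split.
      - destruct Hm1 as [?|Heq]; auto; subst m. specialize (Hmin c ltac:(unfold c; lra)). lra.
      - destruct Hm2 as [?|Heq]; auto; subst m. specialize (Hmin c ltac:(unfold c; lra)). lra. }
    pose proof (S_par_min u K Kd S r k c x0 (x0 + h) m Hmi Hmin) as HK.
    assert (Hsl : Rabs (r + 2 * k * (m - c) - r) < d0).
    { replace (r + 2 * k * (m - c) - r) with (2 * k * (m - c)) by field.
      rewrite !Rabs_mult. rewrite (Rabs_right 2) by lra.
      assert (Rabs k = 8 * e / h) by (unfold k; rewrite Rabs_Ropp; apply Rabs_right;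
        apply Rle_ge, Rdiv_le_0_compat; unfold e; lra).
      assert (Rabs (m - c) <= h / 2) by (apply Rabs_le; unfold c; lra).
      rewrite H. assert (0 <= 8 * e / h) by (apply Rdiv_le_0_compat; unfold e; lra).
      apply Rle_lt_trans with (2 * (8 * e / h) * (h / 2)).
      + apply Rmult_le_compat_l; [lra| auto].
      + replace (2 * (8 * e / h) * (h / 2)) with (8 * e) by (field; lra). unfold e; lra. }
    specialize (Hc m (r + 2 * k * (m - c)) ltac:(apply Rabs_def1; lra) Hsl).
    apply Rabs_def2 in Hc. lra.
  - destruct (S_Kcont _ _ _ S x0 r (K x0 r) ltac:(lra)) as [d0 [Hd0 Hc]].
    set (e := d0 / 16).
    destruct (HR e ltac:(unfold e; lra)) as [d1 [Hd1 HD]].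
    set (h := Rmin d1 d0 / 2).
    assert (Hh0 : 0 < h) by (unfold h; pose proof (Rmin_pos d1 d0 Hd1 Hd0); lra).
    assert (Hh1 : h < d1) by (unfold h; pose proof (Rmin_l d1 d0); lra).
    assert (Hh2 : h < d0) by (unfold h; pose proof (Rmin_r d1 d0); lra).
    set (c := x0 + h / 2). set (k := 8 * e / h).
    set (G := fun y => u y - (r * y + k * (y - c) ^ 2)).
    destruct (EVT_max G x0 (x0 + h) ltac:(lra)) as [m [Hm Hmax]].
    { intro x. unfold G. apply cR_minus; [apply (S_ucont _ _ _ S)|].
      apply cR_der. eexists; apply par_derive. }
    pose proof (RD_bound u x0 r e h Hh0 (HD h ltac:(lra))) as B1.
    pose proof (RD_bound u x0 r e (h / 2) ltac:(lra) (HD (h / 2) ltac:(lra))) as B2.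
    assert (Ekh : k * (h / 2) ^ 2 = 2 * e * h) by (unfold k; field; lra).
    assert (HGx0 : G x0 < G c).
    { unfold G, c. replace (x0 - (x0 + h / 2)) with (- (h / 2)) by field.
      replace ((- (h / 2)) ^ 2) with ((h / 2) ^ 2) by ring.
      replace (x0 + h / 2 - (x0 + h / 2)) with 0 by ring.
      assert (r * (x0 + h / 2) = r * x0 + r * (h / 2)) by field.
      assert (e * (h / 2) > 0) by (apply Rmult_lt_0_compat; unfold e; lra).
      assert ((r - e) * (h / 2) = r * (h / 2) - e * (h / 2)) by field.
      assert (e * h = 2 * (e * (h / 2))) by field. nra. }
    assert (HGx1 : G (x0 + h) < G c).
    { unfold G, c. replace (x0 + h - (x0 + h / 2)) with (h / 2) by field.
      replace (x0 + h / 2 - (x0 + h / 2)) with 0 by ring.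
      assert (r * (x0 + h / 2) = r * x0 + r * (h / 2)) by field.
      assert (r * (x0 + h) = r * x0 + r * h) by field.
      assert (e * (h / 2) > 0) by (apply Rmult_lt_0_compat; unfold e; lra).
      assert ((r - e) * (h / 2) = r * (h / 2) - e * (h / 2)) by field.
      assert ((r + e) * h = r * h + 2 * (e * (h / 2))) by field.
      assert (e * h = 2 * (e * (h / 2))) by field. nra. }
    assert (Hmi : x0 < m < x0 + h).
    { destruct Hm as [Hm1 Hm2]. split.
      - destruct Hm1 as [?|Heq]; auto; subst m. specialize (Hmax c ltac:(unfold c; lra)). lra.
      - destruct Hm2 as [?|Heq]; auto; subst m. specialize (Hmax c ltac:(unfold c; lra)). lra. }
    pose proof (S_par_max u K Kd S r k c x0 (x0 + h) m Hmi Hmax) as HK.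
    assert (Hsl : Rabs (r + 2 * k * (m - c) - r) < d0).
    { replace (r + 2 * k * (m - c) - r) with (2 * k * (m - c)) by field.
      rewrite !Rabs_mult. rewrite (Rabs_right 2) by lra.
      assert (Rabs k = 8 * e / h) by (unfold k; apply Rabs_right;
        apply Rle_ge, Rdiv_le_0_compat; unfold e; lra).
      assert (Rabs (m - c) <= h / 2) by (apply Rabs_le; unfold c; lra).
      rewrite H. assert (0 <= 8 * e / h) by (apply Rdiv_le_0_compat; unfold e; lra).
      apply Rle_lt_trans with (2 * (8 * e / h) * (h / 2)).
      + apply Rmult_le_compat_l; [lra| auto].
      + replace (2 * (8 * e / h) * (h / 2)) with (8 * e) by (field; lra). unfold e; lra. }
    specialize (Hc m (r + 2 * k * (m - c)) ltac:(apply Rabs_def1; lra) Hsl).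
    apply Rabs_def2 in Hc. lra.
Qed.

Lemma LD_of_RD_refl (u : R -> R) x0 l : RD (fun y => u (- y)) (- x0) (- l) -> LD u x0 l.
Proof.
  intros H eps He. destruct (H eps He) as [d [Hd Hh]]. exists d; split; auto.
  intros h Hr. specialize (Hh h Hr).
  replace (- (- x0 + h)) with (x0 - h) in Hh by ring. rewrite Ropp_involutive in Hh.
  replace ((u (x0 - h) - u x0) / h - - l) with (- ((u x0 - u (x0 - h)) / h - l)) in Hh by (field; lra).
  rewrite Rabs_Ropp in Hh. exact Hh.
Qed.

Lemma S_LD_exists u K Kd (S : Setting u K Kd) x0 : exists l, LD u x0 l /\ K x0 l = 0.
Proof.
  pose proof (Setting_refl u K Kd S) as S'.
  destruct (S_RD_exists _ _ _ S' (- x0)) as [r Hr].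
  exists (- r). split.
  - apply LD_of_RD_refl. rewrite Ropp_involutive. exact Hr.
  - pose proof (S_RD_root _ _ _ S' (- x0) r Hr) as H. simpl in H.
    rewrite Ropp_involutive in H. exact H.
Qed.

Lemma S_RD_exists' u K Kd (S : Setting u K Kd) x0 : exists r, RD u x0 r /\ K x0 r = 0.
Proof.
  destruct (S_RD_exists u K Kd S x0) as [r Hr]. exists r; split; auto.
  apply (S_RD_root u K Kd S x0 r Hr).
Qed.

Lemma S_no_convex_kink u K Kd (S : Setting u K Kd) x0 r l :
  RD u x0 r -> LD u x0 l -> K x0 r = 0 -> K x0 l = 0 -> r <= l.
Proof.
  intros HR HL Kr Kl. apply Rnot_lt_le. intro Hlt.
  set (q := (l + r) / 2). set (e := (r - l) / 2).
  destruct (HR e ltac:(unfold e; lra)) as [d1 [Hd1 H1]].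
  destruct (HL e ltac:(unfold e; lra)) as [d2 [Hd2 H2]].
  assert (Hmin : local_min_at (fun y => u y - q * y) x0).
  { exists (Rmin d1 d2); split; [apply Rmin_pos; auto|].
    intros y Hy. pose proof (Rmin_l d1 d2); pose proof (Rmin_r d1 d2).
    apply Rabs_def2 in Hy.
    destruct (Rtotal_order y x0) as [Hyl|[Hye|Hyg]].
    - set (h := x0 - y). specialize (H2 h ltac:(unfold h; lra)).
      apply Rabs_def2 in H2. replace (x0 - h) with y in H2 by (unfold h; ring).
      assert (u x0 - u y < q * h).
      { assert (E : u x0 - u y = ((u x0 - u y) / h) * h) by (field; unfold h; lra).
        rewrite E. apply Rmult_lt_compat_r; [unfold h; lra| unfold q, e in *; lra]. }
      unfold h in *. lra.
    - subst; lra.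
    - set (h := y - x0). specialize (H1 h ltac:(unfold h; lra)).
      apply Rabs_def2 in H1. replace (x0 + h) with y in H1 by (unfold h; ring).
      assert (q * h < u y - u x0).
      { assert (E : u y - u x0 = ((u y - u x0) / h) * h) by (field; unfold h; lra).
        rewrite E. apply Rmult_lt_compat_r; [unfold h; lra| unfold q, e in *; lra]. }
      unfold h in *. lra. }
  assert (Hphi : C1 (fun y => q * y + 0 * (y - 0) ^ 2)) by apply par_C1.
  pose proof (S_sup _ _ _ S _ x0 Hphi) as HS.
  rewrite par_Derive in HS.
  replace (q + 2 * 0 * (x0 - 0)) with q in HS by ring.
  assert (0 <= K x0 q).
  { apply HS. destruct Hmin as [d [Hd Hm]]. exists d; split; auto.
    intros y Hy. specialize (Hm y Hy). simpl in Hm. lra. }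
  pose proof (S_between u K Kd S x0 l q r ltac:(unfold q; lra) ltac:(unfold q; lra) Kl Kr). lra.
Qed.

Lemma derive_of_RD_LD (u : R -> R) x0 p : RD u x0 p -> LD u x0 p -> is_derive u x0 p.
Proof.
  intros HR HL. apply is_derive_Reals. intros eps He.
  destruct (HR eps He) as [d1 [Hd1 H1]]. destruct (HL eps He) as [d2 [Hd2 H2]].
  exists (mkposreal _ (Rmin_pos _ _ Hd1 Hd2)). simpl. intros h Hh0 Hh.
  pose proof (Rmin_l d1 d2); pose proof (Rmin_r d1 d2).
  destruct (Rtotal_order h 0) as [Hn|[He0|Hp]]; [| contradiction |].
  - rewrite Rabs_left in Hh by lra.
    specialize (H2 (- h) ltac:(lra)).
    replace (x0 - - h) with (x0 + h) in H2 by ring.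
    replace ((u x0 - u (x0 + h)) / - h) with ((u (x0 + h) - u x0) / h) in H2 by (field; lra).
    exact H2.
  - rewrite Rabs_right in Hh by lra. apply H1. lra.
Qed.

Lemma RD_LD_of_derive (u : R -> R) x0 p : is_derive u x0 p -> RD u x0 p /\ LD u x0 p.
Proof.
  intro H. apply is_derive_Reals in H. split.
  - intros eps He. destruct (H eps He) as [d Hd]. exists d; split; [apply cond_pos|].
    intros h Hh. apply Hd; [lra| rewrite Rabs_right; lra].
  - intros eps He. destruct (H eps He) as [d Hd]. exists d; split; [apply cond_pos|].
    intros h Hh. specialize (Hd (- h) ltac:(lra) ltac:(rewrite Rabs_left; lra)).
    replace ((u (x0 + - h) - u x0) / - h) with ((u x0 - u (x0 - h)) / h) in Hd by
      (replace (x0 + - h) with (x0 - h) by ring; field; lra).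
    exact Hd.
Qed.

Lemma RD_unique (u : R -> R) x0 a b : RD u x0 a -> RD u x0 b -> a = b.
Proof.
  intros Ha Hb. apply NNPP; intro Hne.
  set (e := Rabs (a - b) / 2).
  assert (He : 0 < e) by (unfold e; apply Rdiv_lt_0_compat; [apply Rabs_pos_lt; lra| lra]).
  destruct (Ha e He) as [d1 [Hd1 H1]]. destruct (Hb e He) as [d2 [Hd2 H2]].
  set (h := Rmin d1 d2 / 2).
  assert (0 < h) by (unfold h; pose proof (Rmin_pos _ _ Hd1 Hd2); lra).
  pose proof (Rmin_l d1 d2); pose proof (Rmin_r d1 d2).
  specialize (H1 h ltac:(unfold h in *; lra)). specialize (H2 h ltac:(unfold h in *; lra)).
  assert (Rabs (a - b) <= Rabs ((u (x0 + h) - u x0) / h - b) + Rabs ((u (x0 + h) - u x0) / h - a)).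
  { replace (a - b) with (((u (x0 + h) - u x0) / h - b) - ((u (x0 + h) - u x0) / h - a)) by ring.
    eapply Rle_trans; [apply Rabs_triang|]. rewrite Rabs_Ropp. lra. }
  unfold e in *. lra.
Qed.

Lemma LD_unique (u : R -> R) x0 a b : LD u x0 a -> LD u x0 b -> a = b.
Proof.
  intros Ha Hb. apply NNPP; intro Hne.
  set (e := Rabs (a - b) / 2).
  assert (He : 0 < e) by (unfold e; apply Rdiv_lt_0_compat; [apply Rabs_pos_lt; lra| lra]).
  destruct (Ha e He) as [d1 [Hd1 H1]]. destruct (Hb e He) as [d2 [Hd2 H2]].
  set (h := Rmin d1 d2 / 2).
  assert (0 < h) by (unfold h; pose proof (Rmin_pos _ _ Hd1 Hd2); lra).
  pose proof (Rmin_l d1 d2); pose proof (Rmin_r d1 d2).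
  specialize (H1 h ltac:(unfold h in *; lra)). specialize (H2 h ltac:(unfold h in *; lra)).
  assert (Rabs (a - b) <= Rabs ((u x0 - u (x0 - h)) / h - b) + Rabs ((u x0 - u (x0 - h)) / h - a)).
  { replace (a - b) with (((u x0 - u (x0 - h)) / h - b) - ((u x0 - u (x0 - h)) / h - a)) by ring.
    eapply Rle_trans; [apply Rabs_triang|]. rewrite Rabs_Ropp. lra. }
  unfold e in *. lra.
Qed.

Lemma S_pointwise u K Kd (S : Setting u K Kd) x0 :
  exists r l, RD u x0 r /\ LD u x0 l /\ K x0 r = 0 /\ K x0 l = 0 /\
    ((r = l /\ is_derive u x0 r) \/ (r < l /\ Kd x0 r < 0 /\ 0 < Kd x0 l)).
Proof.
  destruct (S_RD_exists' u K Kd S x0) as [r [Hr Kr]].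
  destruct (S_LD_exists u K Kd S x0) as [l [Hl Kl]].
  exists r, l. repeat split; auto.
  pose proof (S_no_convex_kink u K Kd S x0 r l Hr Hl Kr Kl) as Hle.
  destruct Hle as [Hlt|Heq].
  - right. split; auto. apply (S_root_signs u K Kd S x0 r l Hlt Kr Kl).
  - left. split; auto. subst. apply derive_of_RD_LD; auto.
Qed.

Lemma RD_le (u : R -> R) t r q : RD u t r ->
  (exists d, 0 < d /\ forall h, 0 < h < d -> (u (t + h) - u t) / h <= q) -> r <= q.
Proof.
  intros HR [d [Hd Hq]]. apply Rnot_lt_le; intro Hlt.
  destruct (HR ((r - q) / 2) ltac:(lra)) as [d1 [Hd1 H1]].
  set (h := Rmin d d1 / 2). assert (0 < h) by (unfold h; pose proof (Rmin_pos _ _ Hd Hd1); lra).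
  pose proof (Rmin_l d d1); pose proof (Rmin_r d d1).
  specialize (Hq h ltac:(unfold h in *; lra)). specialize (H1 h ltac:(unfold h in *; lra)).
  apply Rabs_def2 in H1. lra.
Qed.

Lemma RD_ge (u : R -> R) t r q : RD u t r ->
  (exists d, 0 < d /\ forall h, 0 < h < d -> q <= (u (t + h) - u t) / h) -> q <= r.
Proof.
  intros HR [d [Hd Hq]]. apply Rnot_lt_le; intro Hlt.
  destruct (HR ((q - r) / 2) ltac:(lra)) as [d1 [Hd1 H1]].
  set (h := Rmin d d1 / 2). assert (0 < h) by (unfold h; pose proof (Rmin_pos _ _ Hd Hd1); lra).
  pose proof (Rmin_l d d1); pose proof (Rmin_r d d1).
  specialize (Hq h ltac:(unfold h in *; lra)). specialize (H1 h ltac:(unfold h in *; lra)).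
  apply Rabs_def2 in H1. lra.
Qed.

Lemma LD_le (u : R -> R) t l q : LD u t l ->
  (exists d, 0 < d /\ forall h, 0 < h < d -> (u t - u (t - h)) / h <= q) -> l <= q.
Proof.
  intros HR [d [Hd Hq]]. apply Rnot_lt_le; intro Hlt.
  destruct (HR ((l - q) / 2) ltac:(lra)) as [d1 [Hd1 H1]].
  set (h := Rmin d d1 / 2). assert (0 < h) by (unfold h; pose proof (Rmin_pos _ _ Hd Hd1); lra).
  pose proof (Rmin_l d d1); pose proof (Rmin_r d d1).
  specialize (Hq h ltac:(unfold h in *; lra)). specialize (H1 h ltac:(unfold h in *; lra)).
  apply Rabs_def2 in H1. lra.
Qed.

Lemma LD_ge (u : R -> R) t l q : LD u t l ->
  (exists d, 0 < d /\ forall h, 0 < h < d -> q <= (u t - u (t - h)) / h) -> q <= l.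
Proof.
  intros HR [d [Hd Hq]]. apply Rnot_lt_le; intro Hlt.
  destruct (HR ((q - l) / 2) ltac:(lra)) as [d1 [Hd1 H1]].
  set (h := Rmin d d1 / 2). assert (0 < h) by (unfold h; pose proof (Rmin_pos _ _ Hd Hd1); lra).
  pose proof (Rmin_l d d1); pose proof (Rmin_r d d1).
  specialize (Hq h ltac:(unfold h in *; lra)). specialize (H1 h ltac:(unfold h in *; lra)).
  apply Rabs_def2 in H1. lra.
Qed.

Lemma slope_lt_of (u : R -> R) q a b : a < b -> u b - q * b < u a - q * a -> (u b - u a) / (b - a) < q.
Proof.
  intros Hab H. apply (Rmult_lt_reg_r (b - a)); [lra|].
  replace ((u b - u a) / (b - a) * (b - a)) with (u b - u a) by (field; lra). lra.
Qed.

Lemma S_neg_right u K Kd (S : Setting u K Kd) y p q :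
  K y p = 0 -> K y q < 0 -> p <= q -> p < q /\ Kd y p < 0.
Proof.
  intros Hp Hq Hle. destruct Hle as [Hlt|Heq]; [|subst; lra].
  split; auto. pose proof (S_slope u K Kd S y p q Hlt) as [H1 H2].
  rewrite Hp in H1. assert ((K y q - 0) / (q - p) < 0).
  { unfold Rdiv. apply Rmult_neg_pos; [lra| apply Rinv_0_lt_compat; lra]. }
  lra.
Qed.

Lemma K_neg_after u K Kd (S : Setting u K Kd) y a0 :
  K y a0 = 0 -> Kd y a0 < 0 -> exists q, a0 < q /\ K y q < 0.
Proof.
  intros H0 Hd.
  pose proof (S_Kder _ _ _ S y a0) as HD. apply is_derive_Reals in HD.
  destruct (HD (- Kd y a0 / 2) ltac:(lra)) as [d Hdd].
  exists (a0 + d / 2). split; [pose proof (cond_pos d); lra|].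
  specialize (Hdd (d / 2) ltac:(pose proof (cond_pos d); lra) ltac:(rewrite Rabs_right; pose proof (cond_pos d); lra)).
  rewrite H0 in Hdd. apply Rabs_def2 in Hdd.
  assert (E : K y (a0 + d / 2) = (K y (a0 + d / 2) - 0) / (d / 2) * (d / 2)) by (field; pose proof (cond_pos d); lra).
  rewrite E. apply Rmult_neg_pos; [lra| pose proof (cond_pos d); lra].
Qed.

Lemma S_propagate u K Kd (S : Setting u K Kd) x0 a0 :
  RD u x0 a0 -> K x0 a0 = 0 -> Kd x0 a0 < 0 ->
  exists d, 0 < d /\ forall t, x0 < t < x0 + d -> ex_derive u t /\ Kd t (Derive u t) < 0.
Proof.
  intros HR H0 Hd.
  destruct (K_neg_after u K Kd S x0 a0 H0 Hd) as [q [Hq Kq]].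
  destruct (K_neg_near u K Kd S x0 q Kq) as [d [Hdp Hnear]].
  assert (NM := S_QCc u K Kd S q (x0 - d) (x0 + d) ltac:(intros y Hy; apply Hnear, abs_lt_interval; lra)).
  destruct (HR (q - a0) ltac:(lra)) as [d1 [Hd1 H1]].
  assert (Hgo : exists h1, 0 < h1 /\ forall h, 0 < h < h1 ->
      - (u x0 - q * x0) < - (u (x0 + h) - q * (x0 + h))).
  { exists d1; split; auto. intros h Hh. specialize (H1 h Hh). apply Rabs_def2 in H1.
    assert (Hlt : (u (x0 + h) - u x0) / h < q) by lra.
    apply Dq_lt in Hlt; [lra| lra]. }
  pose proof (B3 _ _ _ x0 NM ltac:(lra) ltac:(lra) Hgo) as Hdec. simpl in Hdec.
  exists d; split; auto. intros t Ht.
  destruct (S_pointwise u K Kd S t) as [r [l [Hr [Hl [Kr [Kl Hcase]]]]]].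
  assert (Hlq : l <= q).
  { apply (LD_le u t l q Hl). exists (t - x0); split; [lra|].
    intros h Hh. left. specialize (Hdec (t - h) t ltac:(lra) ltac:(lra) ltac:(lra)).
    pose proof (slope_lt_of u q (t - h) t ltac:(lra) ltac:(lra)) as Hs.
    replace (t - (t - h)) with h in Hs by ring. exact Hs. }
  assert (Hrq : r <= q).
  { apply (RD_le u t r q Hr). exists (x0 + d - t); split; [lra|].
    intros h Hh. left. specialize (Hdec t (t + h) ltac:(lra) ltac:(lra) ltac:(lra)).
    pose proof (slope_lt_of u q t (t + h) ltac:(lra) ltac:(lra)) as Hs.
    replace (t + h - t) with h in Hs by ring. exact Hs. }
  assert (Kqt : K t q < 0) by (apply Hnear, abs_lt_interval; lra).
  destruct (S_neg_right u K Kd S t l q Kl Kqt Hlq) as [_ Hdl].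
  destruct Hcase as [[Heq Hder]|[_ [_ Hpos]]]; [|lra].
  split; [eexists; exact Hder|].
  rewrite (is_derive_unique _ _ _ Hder). subst r. exact Hdl.
Qed.

Lemma MVT_D (u : R -> R) a b : a < b -> (forall x, a <= x <= b -> ex_derive u x) ->
  (forall x, continuous u x) -> exists xi, a <= xi <= b /\ (u b - u a) / (b - a) = Derive u xi.
Proof.
  intros Hab Hd Hc.
  destruct (MVT_gen u a b (Derive u)) as [xi [Hxi Heq]].
  - intros x Hx. rewrite Rmin_left, Rmax_right in Hx by lra. apply Derive_correct, Hd; lra.
  - intros x _. apply continuity_pt_filterlim, Hc.
  - rewrite Rmin_left, Rmax_right in Hxi by lra. exists xi; split; auto.
    rewrite Heq. field; lra.
Qed.

Lemma ex_derive_per (u : R -> R) x : (forall y, u (y + 1) = u y) -> ex_derive u (x + 1) -> ex_derive u x.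
Proof.
  intros Hp [l Hl]. exists (1 * l).
  apply dR_ext with (f := fun y => u (y + 1)); [intro; apply Hp|].
  apply (dR_comp u (fun y => y + 1)); [exact Hl|].
  apply is_derive_eq with (l := 1 + 0); [apply dR_plus; [apply dR_id| apply dR_const]| ring].
Qed.

Lemma S_all_diff u K Kd (S : Setting u K Kd) :
  (forall x, u (x + 1) = u x) ->
  (forall x, ex_derive u x -> Kd x (Derive u x) <> 0) ->
  forall x, ex_derive u x.
Proof.
  intros Hper HB x0. apply NNPP; intro Hnd.
  destruct (S_pointwise u K Kd S x0) as [r0 [l0 [Hr0 [Hl0 [Kr0 [Kl0 Hc]]]]]].
  destruct Hc as [[_ Hd]|[Hlt [Kdr0 Kdl0]]]; [apply Hnd; eexists; exact Hd|].
  destruct (S_propagate u K Kd S x0 r0 Hr0 Kr0 Kdr0) as [d0 [Hd0 Hprop]].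
  set (Good := fun t => forall s, x0 < s <= t -> ex_derive u s /\ Kd s (Derive u s) < 0).
  set (E := fun t => x0 <= t <= x0 + 1 /\ Good t).
  assert (HbE : bound E) by (exists (x0 + 1); intros t [Ht _]; lra).
  assert (HnE : exists t, E t) by (exists x0; split; [lra| intros s Hs; lra]).
  destruct (completeness E HbE HnE) as [z [Hub Hlub]].
  set (t0 := x0 + Rmin (d0 / 2) (1 / 2)).
  assert (Ht0 : x0 < t0 < x0 + d0 /\ t0 <= x0 + 1).
  { unfold t0. pose proof (Rmin_l (d0/2) (1/2)); pose proof (Rmin_r (d0/2) (1/2));
    pose proof (Rmin_pos (d0/2) (1/2) ltac:(lra) ltac:(lra)). lra. }
  assert (Et0 : E t0).
  { split; [lra|]. intros s Hs. apply Hprop. lra. }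
  assert (Hz1 : t0 <= z) by (apply Hub; exact Et0).
  assert (Hz2 : z <= x0 + 1) by (apply Hlub; intros t [Ht _]; lra).
  assert (HA : forall s, x0 < s < z -> ex_derive u s /\ Kd s (Derive u s) < 0).
  { intros s Hs. apply NNPP; intro Hn.
    assert (Hubs : is_upper_bound E s).
    { intros t [Ht Gt]. apply Rnot_lt_le; intro Hst. apply Hn. apply Gt. lra. }
    specialize (Hlub s Hubs). lra. }
  destruct (S_pointwise u K Kd S z) as [rz [lz [Hrz [Hlz [Krz [Klz Hcz]]]]]].
  assert (HBz : Kd z lz <= 0).
  { apply Rnot_lt_le; intro Hpos.
    destruct (S_Kdcont _ _ _ S z lz (Kd z lz) Hpos) as [d [Hd Hdc]].
    destruct (Hlz (d / 2) ltac:(lra)) as [d2 [Hd2 H2]].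
    set (h := Rmin (Rmin d d2) (z - x0) / 2).
    assert (Hh : 0 < h /\ h < d /\ h < d2 /\ h < z - x0).
    { unfold h. pose proof (Rmin_l (Rmin d d2) (z - x0)); pose proof (Rmin_r (Rmin d d2) (z - x0)).
      pose proof (Rmin_l d d2); pose proof (Rmin_r d d2).
      pose proof (Rmin_pos (Rmin d d2) (z - x0) (Rmin_pos d d2 Hd Hd2) ltac:(lra)). lra. }
    set (a := z - h).
    set (F := fun b => (u b - u a) / (b - a)).
    assert (HFc : continuous F z).
    { unfold F. apply cR_mult.
      - apply cR_minus; [apply (S_ucont _ _ _ S)| apply cR_const].
      - apply cR_inv; [apply cR_minus; [apply cR_id| apply cR_const]| unfold a; lra]. }
    destruct (cR_eps F z HFc (d / 2) ltac:(lra)) as [d3 [Hd3 H3]].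
    set (b := z - Rmin d3 h / 2).
    assert (Hb : a < b < z /\ Rabs (b - z) < d3).
    { unfold b, a. pose proof (Rmin_l d3 h); pose proof (Rmin_r d3 h).
      pose proof (Rmin_pos d3 h Hd3 ltac:(lra)).
      split; [lra| apply Rabs_def1; lra]. }
    specialize (H3 b (proj2 Hb)).
    specialize (H2 h ltac:(lra)).
    replace (z - h) with a in H2 by reflexivity.
    assert (HFz : F z = (u z - u a) / h) by (unfold F, a; f_equal; ring).
    destruct (MVT_D u a b ltac:(lra)) as [xi [Hxi Heq]].
    { intros x Hx. apply (HA x). unfold a in *; lra. }
    { apply (S_ucont _ _ _ S). }
    assert (Hxi2 := HA xi ltac:(unfold a in *; lra)).
    assert (Hxi3 : Rabs (Derive u xi - lz) < d).
    { rewrite <- Heq. change ((u b - u a) / (b - a)) with (F b).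
      apply Rabs_def2 in H3. apply Rabs_def2 in H2. rewrite HFz in H3.
      apply Rabs_def1; lra. }
    specialize (Hdc xi (Derive u xi) ltac:(apply Rabs_def1; unfold a in *; lra) Hxi3).
    apply Rabs_def2 in Hdc. lra. }
  destruct Hcz as [[Heqz Hdz]|[_ [_ Hpos]]]; [|lra].
  subst lz.
  assert (HDz : Derive u z = rz) by (apply is_derive_unique; exact Hdz).
  assert (Hexz : ex_derive u z) by (eexists; exact Hdz).
  assert (Kdz : Kd z rz < 0).
  { pose proof (HB z Hexz) as Hne. rewrite HDz in Hne. destruct HBz; [lra| contradiction]. }
  destruct (Req_dec z (x0 + 1)) as [Hzend|Hzlt].
  - apply Hnd. apply ex_derive_per; auto. rewrite <- Hzend. exact Hexz.
  - destruct (S_propagate u K Kd S z rz Hrz Krz Kdz) as [d3 [Hd3 Hprop3]].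
    set (t1 := Rmin (z + d3 / 2) (x0 + 1)).
    assert (Ht1 : z < t1 /\ t1 < z + d3 /\ t1 <= x0 + 1).
    { unfold t1. pose proof (Rmin_l (z + d3/2) (x0+1)); pose proof (Rmin_r (z + d3/2) (x0+1)).
      unfold Rmin; destruct Rle_dec; lra. }
    assert (Et1 : E t1).
    { split; [lra|]. intros s Hs.
      destruct (Rtotal_order s z) as [Hsz|[Hsz|Hsz]].
      - apply HA; lra.
      - subst s. split; [exact Hexz| rewrite HDz; exact Kdz].
      - apply Hprop3; lra. }
    specialize (Hub t1 Et1). lra.
Qed.

Lemma cR_of_eps (f : R -> R) x :
  (forall eps, 0 < eps -> exists d, 0 < d /\ forall y, Rabs (y - x) < d -> Rabs (f y - f x) < eps) ->
  continuous f x.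
Proof.
  intro H. apply continuity_pt_filterlim.
  intros eps He. destruct (H eps He) as [d [Hd Hy]].
  exists d; split; auto. intros y [_ Hyd]. apply Hy. exact Hyd.
Qed.

Lemma Darboux_up (u : R -> R) a b c : (forall x, ex_derive u x) -> a < b ->
  Derive u a < c < Derive u b -> exists t, a < t < b /\ Derive u t = c.
Proof.
  intros Hd Hab [Hca Hcb].
  set (g := fun y => u y - c * y).
  assert (Hgc : forall x, continuous g x).
  { intro x. unfold g. apply cR_minus; [apply cR_der, Hd| apply cR_der; eexists; apply is_derive_scal, dR_id]. }
  destruct (EVT_min g a b ltac:(lra) Hgc) as [m [Hm Hmin]].
  destruct (RD_LD_of_derive u a _ (Derive_correct _ _ (Hd a))) as [HRa _].
  destruct (RD_LD_of_derive u b _ (Derive_correct _ _ (Hd b))) as [_ HLb].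
  assert (Hma : m <> a).
  { intro E; subst m. destruct (HRa (c - Derive u a) ltac:(lra)) as [d [Hd0 H]].
    set (h := Rmin (d / 2) (b - a)).
    assert (0 < h /\ h < d /\ h <= b - a) by (unfold h; pose proof (Rmin_l (d/2) (b-a)); pose proof (Rmin_r (d/2) (b-a)); pose proof (Rmin_pos (d/2) (b-a) ltac:(lra) ltac:(lra)); lra).
    specialize (H h ltac:(lra)). apply Rabs_def2 in H.
    assert (Hl : (u (a + h) - u a) / h < c) by lra. apply Dq_lt in Hl; [|lra].
    specialize (Hmin (a + h) ltac:(lra)). unfold g in Hmin. lra. }
  assert (Hmb : m <> b).
  { intro E; subst m. destruct (HLb (Derive u b - c) ltac:(lra)) as [d [Hd0 H]].
    set (h := Rmin (d / 2) (b - a)).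
    assert (0 < h /\ h < d /\ h <= b - a) by (unfold h; pose proof (Rmin_l (d/2) (b-a)); pose proof (Rmin_r (d/2) (b-a)); pose proof (Rmin_pos (d/2) (b-a) ltac:(lra) ltac:(lra)); lra).
    specialize (H h ltac:(lra)). apply Rabs_def2 in H.
    assert (Hl : c < (u b - u (b - h)) / h) by lra.
    assert (c * h < u b - u (b - h)).
    { apply (Rmult_lt_compat_r h) in Hl; [|lra]. unfold Rdiv in Hl.
      rewrite Rmult_assoc, Rinv_l in Hl by lra. lra. }
    specialize (Hmin (b - h) ltac:(lra)). unfold g in Hmin. lra. }
  assert (Hmi : a < m < b) by (destruct Hm as [[?|?] [?|?]]; subst; try contradiction; lra).
  exists m; split; auto.
  destruct (RD_LD_of_derive u m _ (Derive_correct _ _ (Hd m))) as [HRm HLm].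
  apply Rle_antisym.
  - apply (LD_le u m _ c HLm). exists (m - a); split; [lra|]. intros h Hh.
    specialize (Hmin (m - h) ltac:(lra)). unfold g in Hmin.
    apply (Rmult_le_reg_r h); [lra|]. unfold Rdiv. rewrite Rmult_assoc, Rinv_l by lra. lra.
  - apply (RD_ge u m _ c HRm). exists (b - m); split; [lra|]. intros h Hh.
    specialize (Hmin (m + h) ltac:(lra)). unfold g in Hmin.
    apply (Rmult_le_reg_r h); [lra|]. unfold Rdiv. rewrite Rmult_assoc, Rinv_l by lra. lra.
Qed.

Lemma Darboux (u : R -> R) a b c : (forall x, ex_derive u x) -> a < b ->
  (Derive u a < c < Derive u b \/ Derive u b < c < Derive u a) ->
  exists t, a < t < b /\ Derive u t = c.
Proof.
  intros Hd Hab [H|H]; [apply Darboux_up; auto|].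
  assert (Hd' : forall x, ex_derive (fun y => - u y) x).
  { intro x. eexists. apply dR_opp, Derive_correct, Hd. }
  assert (HD : forall x, Derive (fun y => - u y) x = - Derive u x).
  { intro x. apply is_derive_unique, dR_opp, Derive_correct, Hd. }
  destruct (Darboux_up (fun y => - u y) a b (- c) Hd' Hab) as [t [Ht Htc]].
  { rewrite !HD; lra. }
  exists t; split; auto. rewrite HD in Htc. lra.
Qed.

Lemma K_signs u K Kd (S : Setting u K Kd) y p0 eta : K y p0 = 0 -> 0 < eta ->
  exists e, 0 < e /\ e <= eta /\
   (Kd y p0 < 0 -> 0 < K y (p0 - e) /\ K y (p0 + e) < 0) /\
   (0 < Kd y p0 -> K y (p0 - e) < 0 /\ 0 < K y (p0 + e)).
Proof.
  intros H0 Heta.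
  destruct (Req_dec (Kd y p0) 0) as [Hz|Hnz].
  { exists eta. repeat split; try lra; intro; lra. }
  pose proof (S_Kder _ _ _ S y p0) as HD. apply is_derive_Reals in HD.
  destruct (HD (Rabs (Kd y p0) / 2) ltac:(apply Rdiv_lt_0_compat; [apply Rabs_pos_lt; auto| lra])) as [d Hdd].
  pose proof (cond_pos d) as Hdp.
  set (e := Rmin eta (d / 2)).
  assert (He : 0 < e /\ e <= eta /\ e < d).
  { unfold e. pose proof (Rmin_l eta (d/2)); pose proof (Rmin_r eta (d/2)); pose proof (Rmin_pos eta (d/2) Heta ltac:(lra)). lra. }
  exists e. split; [lra|]. split; [lra|].
  pose proof (Hdd e ltac:(lra) ltac:(rewrite Rabs_right; lra)) as Hp.
  pose proof (Hdd (- e) ltac:(lra) ltac:(rewrite Rabs_left; lra)) as Hm.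
  rewrite H0 in Hp, Hm. replace (p0 + - e) with (p0 - e) in Hm by ring.
  apply Rabs_def2 in Hp. apply Rabs_def2 in Hm.
  assert (E1 : K y (p0 + e) = (K y (p0 + e) - 0) / e * e) by (field; lra).
  assert (E2 : K y (p0 - e) = - ((K y (p0 - e) - 0) / - e * e)) by (field; lra).
  split; intro Hs.
  - rewrite Rabs_left in Hp, Hm by lra.
    split.
    + rewrite E2. assert ((K y (p0 - e) - 0) / - e * e < 0) by (apply Rmult_neg_pos; lra). lra.
    + rewrite E1. apply Rmult_neg_pos; lra.
  - rewrite Rabs_right in Hp, Hm by lra.
    split.
    + rewrite E2. assert (0 < (K y (p0 - e) - 0) / - e * e) by (apply Rmult_lt_0_compat; lra). lra.
    + rewrite E1. apply Rmult_lt_0_compat; lra.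
Qed.

Lemma S_Dcont u K Kd (S : Setting u K Kd) :
  (forall x, ex_derive u x) -> (forall x, K x (Derive u x) = 0) -> (forall x, Kd x (Derive u x) <> 0) ->
  forall x0, continuous (Derive u) x0.
Proof.
  intros Hd HK HKd x0. apply cR_of_eps. intros eta Heta.
  set (p0 := Derive u x0).
  destruct (K_signs u K Kd S x0 p0 eta (HK x0) Heta) as [e [He [Hee [Hneg Hpos]]]].
  destruct (Rlt_or_le (Kd x0 p0) 0) as [Hs|Hs].
  - destruct (Hneg Hs) as [Ka Kb].
    destruct (K_pos_near u K Kd S x0 _ Ka) as [da [Hda Hna]].
    destruct (K_neg_near u K Kd S x0 _ Kb) as [db [Hdb Hnb]].
    exists (Rmin da db); split; [apply Rmin_pos; auto|].
    intros y Hy. pose proof (Rmin_l da db); pose proof (Rmin_r da db).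
    set (p := Derive u y).
    assert (Hlo : p0 - e < p).
    { apply Rnot_le_lt; intro Hle.
      assert (Ky : 0 < K y (p0 - e)) by (apply Hna; lra).
      assert (Kyb : K y (p0 + e) < 0) by (apply Hnb; lra).
      destruct Hle as [Hlt|Heq].
      + pose proof (S_secant u K Kd S y p (p0 - e) (p0 + e) Hlt ltac:(lra)) as Hsec.
        unfold p in Hsec. rewrite HK in Hsec.
        assert (0 < (K y (p0 - e) - 0) / (p0 - e - Derive u y)) by (apply Rdiv_lt_0_compat; unfold p in *; lra).
        assert ((K y (p0 + e) - K y (p0 - e)) / (p0 + e - (p0 - e)) < 0).
        { unfold Rdiv. apply Rmult_neg_pos; [lra| apply Rinv_0_lt_compat; lra]. }
        lra.
      + pose proof (HK y) as Hk. fold p in Hk. rewrite Heq in Hk. lra. }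
    assert (Hhi : p < p0 + e).
    { apply Rnot_le_lt; intro Hle.
      assert (Hne : y <> x0) by (intro E; unfold p, p0 in *; subst; lra).
      assert (Hc : exists t, Rabs (t - x0) < Rmin da db /\ Derive u t = p0 + e).
      { destruct Hle as [Hlt|Heq]; [|exists y; split; auto].
        destruct (Rlt_or_le x0 y) as [Hxy|Hyx].
        - destruct (Darboux u x0 y (p0 + e) Hd Hxy ltac:(left; unfold p, p0 in *; lra)) as [t [Ht Htc]].
          exists t; split; auto. apply Rabs_def2 in Hy. apply Rabs_def1; lra.
        - destruct (Darboux u y x0 (p0 + e) Hd ltac:(lra) ltac:(right; unfold p, p0 in *; lra)) as [t [Ht Htc]].
          exists t; split; auto. apply Rabs_def2 in Hy. apply Rabs_def1; lra. }
      destruct Hc as [t [Ht Htc]].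
      pose proof (HK t) as Hk. rewrite Htc in Hk.
      pose proof (Hnb t ltac:(lra)). lra. }
    fold p0. apply Rabs_def1; lra.
  - assert (Hs' : 0 < Kd x0 p0) by (destruct Hs; [lra| exfalso; apply (HKd x0); auto]).
    destruct (Hpos Hs') as [Ka Kb].
    destruct (K_neg_near u K Kd S x0 _ Ka) as [da [Hda Hna]].
    destruct (K_pos_near u K Kd S x0 _ Kb) as [db [Hdb Hnb]].
    exists (Rmin da db); split; [apply Rmin_pos; auto|].
    intros y Hy. pose proof (Rmin_l da db); pose proof (Rmin_r da db).
    set (p := Derive u y).
    assert (Hhi : p < p0 + e).
    { apply Rnot_le_lt; intro Hle.
      assert (Ky : K y (p0 - e) < 0) by (apply Hna; lra).
      assert (Kyb : 0 < K y (p0 + e)) by (apply Hnb; lra).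
      destruct Hle as [Hlt|Heq].
      + pose proof (S_secant u K Kd S y (p0 - e) (p0 + e) p ltac:(lra) Hlt) as Hsec.
        unfold p in Hsec. rewrite HK in Hsec.
        assert ((0 - K y (p0 + e)) / (Derive u y - (p0 + e)) < 0).
        { unfold Rdiv. apply Rmult_neg_pos; [lra| apply Rinv_0_lt_compat; unfold p in *; lra]. }
        assert (0 < (K y (p0 + e) - K y (p0 - e)) / (p0 + e - (p0 - e))) by (apply Rdiv_lt_0_compat; lra).
        lra.
      + pose proof (HK y) as Hk. fold p in Hk. rewrite <- Heq in Hk. lra. }
    assert (Hlo : p0 - e < p).
    { apply Rnot_le_lt; intro Hle.
      assert (Hne : y <> x0) by (intro E; unfold p, p0 in *; subst; lra).
      assert (Hc : exists t, Rabs (t - x0) < Rmin da db /\ Derive u t = p0 - e).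
      { destruct Hle as [Hlt|Heq]; [|exists y; split; auto].
        destruct (Rlt_or_le x0 y) as [Hxy|Hyx].
        - destruct (Darboux u x0 y (p0 - e) Hd Hxy ltac:(right; unfold p, p0 in *; lra)) as [t [Ht Htc]].
          exists t; split; auto. apply Rabs_def2 in Hy. apply Rabs_def1; lra.
        - destruct (Darboux u y x0 (p0 - e) Hd ltac:(lra) ltac:(left; unfold p, p0 in *; lra)) as [t [Ht Htc]].
          exists t; split; auto. apply Rabs_def2 in Hy. apply Rabs_def1; lra. }
      destruct Hc as [t [Ht Htc]].
      pose proof (HK t) as Hk. rewrite Htc in Hk.
      pose proof (Hna t ltac:(lra)). lra. }
    fold p0. apply Rabs_def1; lra.
Qed.

Lemma iter_partial_app l m F : iter_partial l (iter_partial m F) = iter_partial (l ++ m) F.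
Proof.
  induction l as [|a l IH]; [reflexivity|].
  simpl. destruct a as [|[|k]]; rewrite IH; reflexivity.
Qed.

Lemma smooth3_iter F m : smooth3 F -> smooth3 (iter_partial m F).
Proof. intros HF l. rewrite iter_partial_app. apply HF. Qed.

Lemma smooth3_dx F : smooth3 F -> smooth3 (dx F).
Proof. intro HF. exact (smooth3_iter F (0%nat :: nil) HF). Qed.
Lemma smooth3_dp F : smooth3 F -> smooth3 (dp F).
Proof. intro HF. exact (smooth3_iter F (1%nat :: nil) HF). Qed.
Lemma smooth3_du F : smooth3 F -> smooth3 (du F).
Proof. intro HF. exact (smooth3_iter F (2%nat :: nil) HF). Qed.

Lemma smooth3_ex F : smooth3 F -> forall x p u,
  ex_derive (fun t => F t p u) x /\ ex_derive (fun t => F x t u) p /\ ex_derive (fun t => F x p t) u.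
Proof. intros HF. exact (proj1 (HF nil)). Qed.

Lemma sm_ex_x F : smooth3 F -> forall x p u, ex_derive (fun t => F t p u) x.
Proof. intros HF x p u. exact (proj1 (smooth3_ex F HF x p u)). Qed.
Lemma sm_ex_p F : smooth3 F -> forall x p u, ex_derive (fun t => F x t u) p.
Proof. intros HF x p u. exact (proj1 (proj2 (smooth3_ex F HF x p u))). Qed.
Lemma sm_ex_u F : smooth3 F -> forall x p u, ex_derive (fun t => F x p t) u.
Proof. intros HF x p u. exact (proj2 (proj2 (smooth3_ex F HF x p u))). Qed.

Lemma smooth3_cont F : smooth3 F -> forall x p u eps, 0 < eps -> exists d, 0 < d /\ forall x' p' u',
    Rabs (x' - x) < d -> Rabs (p' - p) < d -> Rabs (u' - u) < d ->
    Rabs (F x' p' u' - F x p u) < eps.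
Proof. intros HF x p u. apply cont3_eps. exact (proj2 (HF nil) ((x, p), u)). Qed.

Lemma smooth3_comp_cont F (a b c : R -> R) x : smooth3 F ->
  continuous a x -> continuous b x -> continuous c x ->
  continuous (fun y => F (a y) (b y) (c y)) x.
Proof.
  intros HF Ha Hb Hc. apply cR_of_eps. intros eps He.
  destruct (smooth3_cont F HF (a x) (b x) (c x) eps He) as [d [Hd H]].
  destruct (cR_eps a x Ha d Hd) as [d1 [Hd1 H1]].
  destruct (cR_eps b x Hb d Hd) as [d2 [Hd2 H2]].
  destruct (cR_eps c x Hc d Hd) as [d3 [Hd3 H3]].
  exists (Rmin d1 (Rmin d2 d3)). split; [repeat apply Rmin_pos; auto|].
  intros y Hy. pose proof (Rmin_l d1 (Rmin d2 d3)); pose proof (Rmin_r d1 (Rmin d2 d3)).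
  pose proof (Rmin_l d2 d3); pose proof (Rmin_r d2 d3).
  apply H; [apply H1| apply H2| apply H3]; lra.
Qed.

Lemma dp_inc H : smooth3 H -> (forall x p u, 0 < dp (dp H) x p u) ->
  forall x w a b, a < b -> dp H x a w < dp H x b w.
Proof.
  intros HS Hc x w a b Hab.
  destruct (MVT_gen (fun t => dp H x t w) a b (fun t => dp (dp H) x t w)) as [c [Hc1 Heq]].
  - intros t _. apply Derive_correct. exact (sm_ex_p _ (smooth3_dp H HS) x t w).
  - intros t _. apply continuity_pt_filterlim. apply (cR_der (fun t => dp H x t w) t). exact (sm_ex_p _ (smooth3_dp H HS) x t w).
  - specialize (Hc x c w). assert (0 < dp (dp H) x c w * (b - a)) by (apply Rmult_lt_0_compat; lra). lra.
Qed.

Lemma H_secant H x w : smooth3 H -> (forall x p u, 0 < dp (dp H) x p u) ->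
  forall a b c, a < b -> b < c -> (H x b w - H x a w) / (b - a) < (H x c w - H x b w) / (c - b).
Proof.
  intros HS Hc a b c H1 H2.
  assert (Hd : forall t, is_derive (fun t => H x t w) t (dp H x t w)).
  { intro t. apply Derive_correct. exact (sm_ex_p _ HS x t w). }
  pose proof (slope_bounds _ _ Hd (fun a b => dp_inc H HS Hc x w a b) a b H1).
  pose proof (slope_bounds _ _ Hd (fun a b => dp_inc H HS Hc x w a b) b c H2).
  lra.
Qed.

Lemma H_coer H u0 : smooth3 H -> (forall x p u, 0 < dp (dp H) x p u) -> superlinear_in_p H ->
  (forall x, continuous u0 x) ->
  forall x0, exists d P, 0 < d /\ forall y q, Rabs (y - x0) < d -> P <= Rabs q -> 0 < H y q (u0 y).
Proof.
  intros HS Hc Hsup Hu x0.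
  set (w := u0 x0).
  destruct (Hsup x0 w 1) as [R1 HR1].
  set (q1 := Rabs R1 + 1). set (q1' := - (Rabs R1 + 1)).
  assert (Hq1 : 0 < H x0 q1 w).
  { specialize (HR1 q1 ltac:(unfold q1; rewrite Rabs_right; pose proof (Rle_abs R1); pose proof (Rabs_pos R1); lra)).
    unfold q1 in *. rewrite Rabs_right in HR1; pose proof (Rabs_pos R1); lra. }
  assert (Hq1' : 0 < H x0 q1' w).
  { specialize (HR1 q1' ltac:(unfold q1'; rewrite Rabs_left; pose proof (Rle_abs R1); pose proof (Rabs_pos R1); lra)).
    unfold q1' in *. rewrite Rabs_left in HR1; pose proof (Rabs_pos R1); lra. }
  destruct (Hsup x0 w (H x0 q1 w + 1)) as [R2 HR2].
  destruct (Hsup x0 w (H x0 q1' w + 1)) as [R3 HR3].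
  set (q2 := Rabs R2 + q1 + 1). set (q2' := - (Rabs R3 + Rabs q1' + 1)).
  assert (Hq2 : H x0 q1 w + 1 <= H x0 q2 w).
  { assert (Hq2p : 1 <= q2) by (unfold q2, q1; pose proof (Rabs_pos R2); pose proof (Rabs_pos R1); lra).
    specialize (HR2 q2 ltac:(rewrite (Rabs_right q2) by lra; unfold q2; pose proof (Rle_abs R2); unfold q1; pose proof (Rabs_pos R1); lra)).
    rewrite Rabs_right in HR2 by lra.
    assert ((H x0 q1 w + 1) * 1 <= (H x0 q1 w + 1) * q2) by (apply Rmult_le_compat_l; lra). lra. }
  assert (Hq2' : H x0 q1' w + 1 <= H x0 q2' w).
  { assert (Hq2p : q2' <= -1) by (unfold q2'; pose proof (Rabs_pos R3); pose proof (Rabs_pos q1'); lra).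
    specialize (HR3 q2' ltac:(rewrite (Rabs_left q2') by lra; unfold q2'; pose proof (Rle_abs R3); pose proof (Rabs_pos q1'); lra)).
    rewrite Rabs_left in HR3 by lra.
    assert ((H x0 q1' w + 1) * 1 <= (H x0 q1' w + 1) * (- q2')) by (apply Rmult_le_compat_l; lra). lra. }
  set (m := Rmin (Rmin (H x0 q1 w) (H x0 q1' w)) (1 / 2)).
  assert (Hm : 0 < m /\ m <= H x0 q1 w /\ m <= H x0 q1' w /\ m <= 1 / 2).
  { unfold m. pose proof (Rmin_l (Rmin (H x0 q1 w) (H x0 q1' w)) (1/2)).
    pose proof (Rmin_r (Rmin (H x0 q1 w) (H x0 q1' w)) (1/2)).
    pose proof (Rmin_l (H x0 q1 w) (H x0 q1' w)); pose proof (Rmin_r (H x0 q1 w) (H x0 q1' w)).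
    pose proof (Rmin_pos (Rmin (H x0 q1 w) (H x0 q1' w)) (1/2) (Rmin_pos _ _ Hq1 Hq1') ltac:(lra)). lra. }
  assert (Hcq : forall q, exists d, 0 < d /\ forall y, Rabs (y - x0) < d -> Rabs (H y q (u0 y) - H x0 q w) < m / 2).
  { intro q. apply cR_eps with (f := fun y => H y q (u0 y)); [|lra].
    apply smooth3_comp_cont; auto; [apply cR_id| apply cR_const]. }
  destruct (Hcq q1) as [e1 [He1 H1]]. destruct (Hcq q1') as [e2 [He2 H2]].
  destruct (Hcq q2) as [e3 [He3 H3]]. destruct (Hcq q2') as [e4 [He4 H4]].
  set (d := Rmin (Rmin e1 e2) (Rmin e3 e4)).
  exists d, (Rmax q2 (- q2')). split; [unfold d; repeat apply Rmin_pos; auto|].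
  intros y q Hy Hq.
  assert (Hyd : Rabs (y - x0) < e1 /\ Rabs (y - x0) < e2 /\ Rabs (y - x0) < e3 /\ Rabs (y - x0) < e4).
  { unfold d in Hy. pose proof (Rmin_l (Rmin e1 e2) (Rmin e3 e4)); pose proof (Rmin_r (Rmin e1 e2) (Rmin e3 e4)).
    pose proof (Rmin_l e1 e2); pose proof (Rmin_r e1 e2); pose proof (Rmin_l e3 e4); pose proof (Rmin_r e3 e4). lra. }
  destruct Hyd as [Y1 [Y2 [Y3 Y4]]].
  specialize (H1 y Y1); specialize (H2 y Y2); specialize (H3 y Y3); specialize (H4 y Y4).
  apply Rabs_def2 in H1; apply Rabs_def2 in H2; apply Rabs_def2 in H3; apply Rabs_def2 in H4.
  pose proof (Rmax_l q2 (- q2')); pose proof (Rmax_r q2 (- q2')).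
  assert (Hq12 : q1 < q2) by (unfold q2; pose proof (Rabs_pos R2); lra).
  assert (Hq12' : q2' < q1') by (unfold q2', q1'; pose proof (Rabs_pos R3); pose proof (Rabs_pos R1); rewrite Rabs_Ropp, (Rabs_right (Rabs R1 + 1)) by lra; lra).
  destruct (Rle_or_lt 0 q) as [Hq0|Hq0].
  - rewrite Rabs_right in Hq by lra.
    destruct (Req_dec q q2) as [->|Hne]; [lra|].
    pose proof (H_secant H y (u0 y) HS Hc q1 q2 q Hq12 ltac:(lra)) as Hs.
    assert (0 < (H y q2 (u0 y) - H y q1 (u0 y)) / (q2 - q1)) by (apply Rdiv_lt_0_compat; lra).
    assert (Hx : 0 < (H y q (u0 y) - H y q2 (u0 y)) / (q - q2)) by lra.
    assert (0 < H y q (u0 y) - H y q2 (u0 y)).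
    { apply (Rmult_lt_reg_r (/ (q - q2))); [apply Rinv_0_lt_compat; lra|]. rewrite Rmult_0_l. exact Hx. }
    lra.
  - rewrite Rabs_left in Hq by lra.
    destruct (Req_dec q q2') as [->|Hne]; [lra|].
    pose proof (H_secant H y (u0 y) HS Hc q q2' q1' ltac:(lra) Hq12') as Hs.
    assert ((H y q1' (u0 y) - H y q2' (u0 y)) / (q1' - q2') < 0).
    { unfold Rdiv. apply Rmult_neg_pos; [lra| apply Rinv_0_lt_compat; lra]. }
    assert (Hx : (H y q2' (u0 y) - H y q (u0 y)) / (q2' - q) < 0) by lra.
    assert (H y q2' (u0 y) - H y q (u0 y) < 0).
    { apply (Rmult_lt_reg_r (/ (q2' - q))); [apply Rinv_0_lt_compat; lra|]. rewrite Rmult_0_l. exact Hx. }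
    lra.
Qed.

Lemma H_Setting H u0 : smooth3 H -> (forall x p u, 0 < dp (dp H) x p u) -> superlinear_in_p H ->
  viscosity_solution H u0 ->
  Setting u0 (fun y q => H y q (u0 y)) (fun y q => dp H y q (u0 y)).
Proof.
  intros HS Hc Hsup [Hper [Hu [Hsub Hsupv]]]. constructor.
  - exact Hu.
  - intros phi x0 Hphi Hm. apply Hsub; auto.
  - intros phi x0 Hphi Hm. apply Hsupv; auto.
  - intros y q eps He.
    destruct (smooth3_cont H HS y q (u0 y) eps He) as [d [Hd Hh]].
    destruct (cR_eps u0 y (Hu y) d Hd) as [d1 [Hd1 H1]].
    exists (Rmin d d1); split; [apply Rmin_pos; auto|].
    intros y' q' Hy Hq. pose proof (Rmin_l d d1); pose proof (Rmin_r d d1).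
    apply Hh; [lra|lra| apply H1; lra].
  - intros y q eps He.
    destruct (smooth3_cont (dp H) (smooth3_dp H HS) y q (u0 y) eps He) as [d [Hd Hh]].
    destruct (cR_eps u0 y (Hu y) d Hd) as [d1 [Hd1 H1]].
    exists (Rmin d d1); split; [apply Rmin_pos; auto|].
    intros y' q' Hy Hq. pose proof (Rmin_l d d1); pose proof (Rmin_r d d1).
    apply Hh; [lra|lra| apply H1; lra].
  - intros y q. apply Derive_correct. exact (sm_ex_p _ HS y q (u0 y)).
  - intros y a b Hab. apply dp_inc; auto.
  - apply H_coer; auto.
Qed.

Fixpoint Cn (n : nat) (f : R -> R) : Prop :=
  match n with
  | O => forall x, continuous f x
  | S m => (forall x, ex_derive f x) /\ Cn m (Derive f)
  end.

Lemma Cn_ext n : forall f g, (forall x, f x = g x) -> Cn n f -> Cn n g.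
Proof.
  induction n as [|n IH]; intros f g E Hf.
  - intro x. apply cR_ext with f; auto.
  - destruct Hf as [Hd Hc]. split.
    + intro x. apply (ex_derive_ext f g); auto.
    + apply (IH (Derive f)); auto. intro x. apply Derive_ext; auto.
Qed.

Lemma Cn_cont n f : Cn n f -> forall x, continuous f x.
Proof.
  destruct n; simpl; [auto|]. intros [Hd _] x. apply cR_der; auto.
Qed.

Lemma Cn_S_le n : forall f, Cn (S n) f -> Cn n f.
Proof.
  induction n as [|n IH]; intros f Hf.
  - simpl. apply Cn_cont with 1%nat. exact Hf.
  - destruct Hf as [Hd Hc]. split; auto.
Qed.

Lemma Cn_const n c : Cn n (fun _ => c).
Proof.
  revert c; induction n as [|n IH]; intro c.
  - intro; apply cR_const.
  - split.
    + intro x; eexists; apply dR_const.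
    + apply Cn_ext with (fun _ => 0); [|apply IH].
      intro x. symmetry. apply is_derive_unique, dR_const.
Qed.

Lemma Cn_id n : Cn n (fun y => y).
Proof.
  destruct n as [|n].
  - intro; apply cR_id.
  - split.
    + intro x; eexists; apply dR_id.
    + apply Cn_ext with (fun _ => 1); [|apply Cn_const].
      intro x. symmetry. apply is_derive_unique, dR_id.
Qed.

Lemma Cn_plus n : forall f g, Cn n f -> Cn n g -> Cn n (fun y => f y + g y).
Proof.
  induction n as [|n IH]; intros f g Hf Hg.
  - intro x; apply cR_plus; auto.
  - destruct Hf as [Hfd Hfc]. destruct Hg as [Hgd Hgc]. split.
    + intro x. eexists. apply dR_plus; apply Derive_correct; auto.
    + apply Cn_ext with (fun y => Derive f y + Derive g y); [|apply IH; auto].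
      intro x. symmetry. apply is_derive_unique. apply dR_plus; apply Derive_correct; auto.
Qed.

Lemma Cn_opp n : forall f, Cn n f -> Cn n (fun y => - f y).
Proof.
  induction n as [|n IH]; intros f Hf.
  - intro x; apply cR_opp; auto.
  - destruct Hf as [Hfd Hfc]. split.
    + intro x. eexists. apply dR_opp; apply Derive_correct; auto.
    + apply Cn_ext with (fun y => - Derive f y); [|apply IH; auto].
      intro x. symmetry. apply is_derive_unique. apply dR_opp; apply Derive_correct; auto.
Qed.

Lemma Cn_minus n f g : Cn n f -> Cn n g -> Cn n (fun y => f y - g y).
Proof.
  intros Hf Hg. apply Cn_ext with (fun y => f y + - g y); [intro; ring|].
  apply Cn_plus; auto. apply Cn_opp; auto.
Qed.

Lemma Cn_mult n : forall f g, Cn n f -> Cn n g -> Cn n (fun y => f y * g y).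
Proof.
  induction n as [|n IH]; intros f g Hf Hg.
  - intro x; apply cR_mult; auto.
  - assert (Hf' := Cn_S_le n f Hf). assert (Hg' := Cn_S_le n g Hg).
    destruct Hf as [Hfd Hfc]. destruct Hg as [Hgd Hgc]. split.
    + intro x. eexists. apply dR_mult; apply Derive_correct; auto.
    + apply Cn_ext with (fun y => Derive f y * g y + f y * Derive g y).
      * intro x. symmetry. apply is_derive_unique. apply dR_mult; apply Derive_correct; auto.
      * apply Cn_plus; apply IH; auto.
Qed.

Lemma Cn_inv n : forall g, Cn n g -> (forall x, g x <> 0) -> Cn n (fun y => / g y).
Proof.
  induction n as [|n IH]; intros g Hg Hnz.
  - intro x; apply cR_inv; auto.
  - assert (Hg' := Cn_S_le n g Hg).
    destruct Hg as [Hgd Hgc]. split.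
    + intro x. eexists. apply is_derive_inv; [apply Derive_correct; auto| auto].
    + apply Cn_ext with (fun y => - Derive g y * ((/ g y) * (/ g y))).
      * intro x. symmetry. apply is_derive_unique.
        apply is_derive_eq with (l := - Derive g x / g x ^ 2).
        -- apply is_derive_inv; [apply Derive_correct; auto| auto].
        -- field. auto.
      * apply Cn_mult; [apply Cn_opp; auto|]. apply Cn_mult; apply IH; auto.
Qed.

Lemma Cn_exp n : forall f, Cn n f -> Cn n (fun y => exp (f y)).
Proof.
  induction n as [|n IH]; intros f Hf.
  - intro x; apply cR_exp; auto.
  - assert (Hf' := Cn_S_le n f Hf).
    destruct Hf as [Hfd Hfc].
    assert (Hd : forall x, is_derive (fun y => exp (f y)) x (Derive f x * exp (f x))).
    { intro x. apply dR_comp; [|apply Derive_correct; auto].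
      apply is_derive_Reals, derivable_pt_lim_exp. }
    split.
    + intro x. eexists. apply Hd.
    + apply Cn_ext with (fun y => Derive f y * exp (f y)).
      * intro x. symmetry. apply is_derive_unique, Hd.
      * apply Cn_mult; auto.
Qed.

Lemma Cn_smooth1 f : (forall n, Cn n f) -> smooth1 f.
Proof.
  intros Hf n x. destruct n as [|n]; [exact I|].
  simpl. revert f Hf x. induction n as [|n IH]; intros f Hf x.
  - simpl. apply (proj1 (Hf 1%nat)).
  - apply (ex_derive_ext (Derive_n (Derive f) n)).
    + intro t. transitivity (Derive_n (Derive_n f 1) n t).
      * apply Derive_n_ext. intro; reflexivity.
      * rewrite Derive_n_comp. replace (n + 1)%nat with (S n) by lia. reflexivity.
    + apply IH. intro m. apply (proj2 (Hf (S m))).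
Qed.

Definition conv (f : R -> R) (l : R) := forall eps, 0 < eps -> exists d, 0 < d /\
  forall h, h <> 0 -> Rabs h < d -> Rabs (f h - l) < eps.

Lemma conv_ext f g l : (exists d, 0 < d /\ forall h, h <> 0 -> Rabs h < d -> f h = g h) -> conv f l -> conv g l.
Proof.
  intros [d0 [Hd0 E]] Hf eps He. destruct (Hf eps He) as [d [Hd H]].
  exists (Rmin d d0); split; [apply Rmin_pos; auto|].
  intros h Hh Hh'. pose proof (Rmin_l d d0); pose proof (Rmin_r d d0).
  rewrite <- E by (auto; lra). apply H; auto; lra.
Qed.

Lemma conv_const c : conv (fun _ => c) c.
Proof. intros eps He. exists 1; split; [lra|]. intros. rewrite Rminus_eq_0, Rabs_R0; auto. Qed.

Lemma conv_plus f g a b : conv f a -> conv g b -> conv (fun h => f h + g h) (a + b).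
Proof.
  intros Hf Hg eps He. destruct (Hf (eps/2) ltac:(lra)) as [d1 [Hd1 H1]].
  destruct (Hg (eps/2) ltac:(lra)) as [d2 [Hd2 H2]].
  exists (Rmin d1 d2); split; [apply Rmin_pos; auto|].
  intros h Hh Hh'. pose proof (Rmin_l d1 d2); pose proof (Rmin_r d1 d2).
  specialize (H1 h Hh ltac:(lra)). specialize (H2 h Hh ltac:(lra)).
  apply Rabs_def2 in H1; apply Rabs_def2 in H2. apply Rabs_def1; lra.
Qed.

Lemma conv_opp f a : conv f a -> conv (fun h => - f h) (- a).
Proof.
  intros Hf eps He. destruct (Hf eps He) as [d [Hd H]]. exists d; split; auto.
  intros h Hh Hh'. replace (- f h - - a) with (- (f h - a)) by ring. rewrite Rabs_Ropp. auto.
Qed.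

Lemma conv_mult f g a b : conv f a -> conv g b -> conv (fun h => f h * g h) (a * b).
Proof.
  intros Hf Hg eps He.
  set (M := Rabs a + Rabs b + 1).
  assert (HM : 1 <= M) by (unfold M; pose proof (Rabs_pos a); pose proof (Rabs_pos b); lra).
  set (e := Rmin 1 (eps / (3 * M))).
  assert (He0 : 0 < e) by (unfold e; apply Rmin_pos; [lra| apply Rdiv_lt_0_compat; lra]).
  assert (He1 : e <= 1) by (unfold e; apply Rmin_l).
  assert (He2 : e * M <= eps / 3).
  { unfold e. pose proof (Rmin_r 1 (eps / (3 * M))).
    apply Rle_trans with (eps / (3 * M) * M); [apply Rmult_le_compat_r; lra|].
    right. field. lra. }
  destruct (Hf e He0) as [d1 [Hd1 H1]]. destruct (Hg e He0) as [d2 [Hd2 H2]].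
  exists (Rmin d1 d2); split; [apply Rmin_pos; auto|].
  intros h Hh Hh'. pose proof (Rmin_l d1 d2); pose proof (Rmin_r d1 d2).
  specialize (H1 h Hh ltac:(lra)). specialize (H2 h Hh ltac:(lra)).
  replace (f h * g h - a * b) with ((f h - a) * (g h - b) + (f h - a) * b + a * (g h - b)) by ring.
  eapply Rle_lt_trans; [apply Rabs_triang|].
  eapply Rle_lt_trans; [apply Rplus_le_compat_r, Rabs_triang|].
  rewrite !Rabs_mult.
  assert (Rabs (f h - a) * Rabs (g h - b) <= e * e) by (apply Rmult_le_compat; try apply Rabs_pos; lra).
  assert (Rabs (f h - a) * Rabs b <= e * Rabs b) by (apply Rmult_le_compat_r; [apply Rabs_pos| lra]).
  assert (Rabs a * Rabs (g h - b) <= Rabs a * e) by (apply Rmult_le_compat_l; [apply Rabs_pos| lra]).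
  assert (e * e <= e * 1) by (apply Rmult_le_compat_l; lra).
  assert (e * (Rabs a + Rabs b + 1) = e * M) by reflexivity.
  assert (e * (Rabs a + Rabs b + 1) = e * Rabs a + e * Rabs b + e * 1) by ring.
  lra.
Qed.

Lemma conv_inv f a : conv f a -> a <> 0 -> conv (fun h => / f h) (/ a).
Proof.
  intros Hf Ha eps He.
  set (e := Rmin (Rabs a / 2) (eps * (Rabs a * Rabs a) / 2)).
  assert (Ha0 : 0 < Rabs a) by (apply Rabs_pos_lt; auto).
  assert (He0 : 0 < e) by (unfold e; apply Rmin_pos; [lra| apply Rdiv_lt_0_compat; [apply Rmult_lt_0_compat; [lra| apply Rmult_lt_0_compat; lra]| lra]]).
  destruct (Hf e He0) as [d [Hd H]]. exists d; split; auto.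
  intros h Hh Hh'. specialize (H h Hh Hh').
  pose proof (Rmin_l (Rabs a / 2) (eps * (Rabs a * Rabs a) / 2)).
  pose proof (Rmin_r (Rabs a / 2) (eps * (Rabs a * Rabs a) / 2)).
  assert (Hfh : Rabs a / 2 <= Rabs (f h)).
  { pose proof (Rabs_triang_inv a (a - f h)). replace (a - (a - f h)) with (f h) in H2 by ring.
    rewrite <- Rabs_Ropp in H. replace (- (f h - a)) with (a - f h) in H by ring. fold e in H0. lra. }
  assert (Hfn : f h <> 0) by (intro E; rewrite E, Rabs_R0 in Hfh; lra).
  replace (/ f h - / a) with ((a - f h) / (f h * a)) by (field; auto).
  unfold Rdiv. rewrite Rabs_mult, Rabs_inv, Rabs_mult.
  rewrite <- Rabs_Ropp. replace (- (a - f h)) with (f h - a) by ring.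
  apply (Rmult_lt_reg_r (Rabs (f h) * Rabs a)); [apply Rmult_lt_0_compat; lra|].
  rewrite Rmult_assoc, Rinv_l by (apply Rgt_not_eq, Rmult_lt_0_compat; lra). rewrite Rmult_1_r.
  apply Rlt_le_trans with e; [lra|].
  apply Rle_trans with (eps * (Rabs a * Rabs a) / 2); [fold e in H1; lra|].
  assert (eps * (Rabs a / 2 * Rabs a) <= eps * (Rabs (f h) * Rabs a)).
  { apply Rmult_le_compat_l; [lra|]. apply Rmult_le_compat_r; lra. }
  replace (eps * (Rabs a * Rabs a) / 2) with (eps * (Rabs a / 2 * Rabs a)) by field. exact H2.
Qed.

Lemma conv_deriv (f : R -> R) x l : is_derive f x l -> conv (fun h => (f (x + h) - f x) / h) l.
Proof.
  intro H. apply is_derive_Reals in H. intros eps He. destruct (H eps He) as [d Hd].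
  exists d; split; [apply cond_pos|]. intros h Hh Hh'. apply Hd; auto.
Qed.

Lemma deriv_conv (f : R -> R) x l : conv (fun h => (f (x + h) - f x) / h) l -> is_derive f x l.
Proof.
  intro H. apply is_derive_Reals. intros eps He. destruct (H eps He) as [d [Hd Hh]].
  exists (mkposreal d Hd). intros h Hh0 Hh1. apply Hh; auto.
Qed.

Lemma conv_cont_at (f : R -> R) x : continuous f x -> conv (fun h => f (x + h)) (f x).
Proof.
  intro Hc. intros eps He. destruct (cR_eps f x Hc eps He) as [d [Hd H]].
  exists d; split; auto. intros h _ Hh. apply H. replace (x + h - x) with h by ring. auto.
Qed.

Definition DQ (g dg : R -> R) (a b : R) : R :=
  if Req_EM_T b a then dg a else (g b - g a) / (b - a).

Lemma DQ_eq g dg a b : g b - g a = DQ g dg a b * (b - a).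
Proof.
  unfold DQ. destruct (Req_EM_T b a) as [->|Hne]; [ring| field; lra].
Qed.

Lemma DQ_mvt g dg a b : (forall t, is_derive g t (dg t)) ->
  exists xi, Rabs (xi - a) <= Rabs (b - a) /\ DQ g dg a b = dg xi.
Proof.
  intro Hd. unfold DQ. destruct (Req_EM_T b a) as [->|Hne].
  - exists a. rewrite Rminus_eq_0, Rabs_R0. split; [lra| reflexivity].
  - destruct (MVT_gen g a b dg) as [xi [Hxi Heq]].
    + intros; apply Hd.
    + intros t _. apply continuity_pt_filterlim, cR_der. eexists; apply Hd.
    + exists xi. split.
      * unfold Rmin, Rmax in Hxi. destruct Rle_dec; apply Rabs_le;
          [rewrite (Rabs_right (b - a)) by lra| rewrite (Rabs_left (b - a)) by lra]; split; lra.
      * rewrite Heq. field. lra.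
Qed.

Lemma conv_cont3 (G : R -> R -> R -> R) z1 z2 z3 (P w1 w2 w3 : R -> R) :
  (forall eps, 0 < eps -> exists d, 0 < d /\ forall x p u,
     Rabs (x - z1) < d -> Rabs (p - z2) < d -> Rabs (u - z3) < d -> Rabs (G x p u - G z1 z2 z3) < eps) ->
  conv w1 z1 -> conv w2 z2 -> conv w3 z3 ->
  (forall h, h <> 0 -> exists xi1 xi2 xi3, Rabs (xi1 - z1) <= Rabs (w1 h - z1) /\
      Rabs (xi2 - z2) <= Rabs (w2 h - z2) /\ Rabs (xi3 - z3) <= Rabs (w3 h - z3) /\ P h = G xi1 xi2 xi3) ->
  conv P (G z1 z2 z3).
Proof.
  intros HG H1 H2 H3 HP eps He.
  destruct (HG eps He) as [d [Hd Hc]].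
  destruct (H1 d Hd) as [d1 [Hd1 K1]]. destruct (H2 d Hd) as [d2 [Hd2 K2]]. destruct (H3 d Hd) as [d3 [Hd3 K3]].
  exists (Rmin d1 (Rmin d2 d3)). split; [repeat apply Rmin_pos; auto|].
  intros h Hh Hh'.
  pose proof (Rmin_l d1 (Rmin d2 d3)); pose proof (Rmin_r d1 (Rmin d2 d3)); pose proof (Rmin_l d2 d3); pose proof (Rmin_r d2 d3).
  destruct (HP h Hh) as [x1 [x2 [x3 [E1 [E2 [E3 ->]]]]]].
  specialize (K1 h Hh ltac:(lra)). specialize (K2 h Hh ltac:(lra)). specialize (K3 h Hh ltac:(lra)).
  apply Hc; lra.
Qed.

Lemma sm_derx F : smooth3 F -> forall p u t, is_derive (fun s => F s p u) t (dx F t p u).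
Proof. intros HF p u t. apply Derive_correct. apply (sm_ex_x F HF). Qed.
Lemma sm_derp F : smooth3 F -> forall x u t, is_derive (fun s => F x s u) t (dp F x t u).
Proof. intros HF x u t. apply Derive_correct. apply (sm_ex_p F HF). Qed.
Lemma sm_deru F : smooth3 F -> forall x p t, is_derive (fun s => F x p s) t (du F x p t).
Proof. intros HF x p t. apply Derive_correct. apply (sm_ex_u F HF). Qed.

Lemma chain3 F (a b c : R -> R) x da db dc : smooth3 F ->
  is_derive a x da -> is_derive b x db -> is_derive c x dc ->
  is_derive (fun y => F (a y) (b y) (c y)) x
    (dx F (a x) (b x) (c x) * da + dp F (a x) (b x) (c x) * db + du F (a x) (b x) (c x) * dc).
Proof.
  intros HF Ha Hb Hc. apply deriv_conv.
  set (P1 := fun h => DQ (fun t => F t (b (x + h)) (c (x + h))) (fun t => dx F t (b (x + h)) (c (x + h))) (a x) (a (x + h))).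
  set (P2 := fun h => DQ (fun t => F (a x) t (c (x + h))) (fun t => dp F (a x) t (c (x + h))) (b x) (b (x + h))).
  set (P3 := fun h => DQ (fun t => F (a x) (b x) t) (fun t => du F (a x) (b x) t) (c x) (c (x + h))).
  apply conv_ext with (fun h => P1 h * ((a (x + h) - a x) / h) + P2 h * ((b (x + h) - b x) / h) + P3 h * ((c (x + h) - c x) / h)).
  { exists 1; split; [lra|]. intros h Hh _.
    unfold P1, P2, P3.
    pose proof (DQ_eq (fun t => F t (b (x + h)) (c (x + h))) (fun t => dx F t (b (x + h)) (c (x + h))) (a x) (a (x + h))) as E1.
    pose proof (DQ_eq (fun t => F (a x) t (c (x + h))) (fun t => dp F (a x) t (c (x + h))) (b x) (b (x + h))) as E2.
    pose proof (DQ_eq (fun t => F (a x) (b x) t) (fun t => du F (a x) (b x) t) (c x) (c (x + h))) as E3.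
    simpl in E1, E2, E3.
    apply (Rmult_eq_reg_r h); [|auto].
    unfold Rdiv. field_simplify; [|auto|auto].
    rewrite <- ?Rmult_assoc.
    set (q1 := DQ (fun t => F t (b (x + h)) (c (x + h))) (fun t => dx F t (b (x + h)) (c (x + h))) (a x) (a (x + h))) in *.
    set (q2 := DQ (fun t => F (a x) t (c (x + h))) (fun t => dp F (a x) t (c (x + h))) (b x) (b (x + h))) in *.
    set (q3 := DQ (fun t => F (a x) (b x) t) (fun t => du F (a x) (b x) t) (c x) (c (x + h))) in *.
    lra. }
  assert (W1 := conv_cont_at a x (cR_der a x (ex_intro _ da Ha))).
  assert (W2 := conv_cont_at b x (cR_der b x (ex_intro _ db Hb))).
  assert (W3 := conv_cont_at c x (cR_der c x (ex_intro _ dc Hc))).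
  apply conv_plus; [apply conv_plus|]; apply conv_mult.
  - apply (conv_cont3 (dx F) (a x) (b x) (c x) P1 _ _ _ (smooth3_cont _ (smooth3_dx F HF) (a x) (b x) (c x)) W1 W2 W3).
    intros h Hh. destruct (DQ_mvt (fun t => F t (b (x + h)) (c (x + h))) (fun t => dx F t (b (x + h)) (c (x + h))) (a x) (a (x + h)) (sm_derx F HF _ _)) as [xi [Hxi E]].
    exists xi, (b (x + h)), (c (x + h)). repeat split; auto; lra.
  - apply conv_deriv; auto.
  - apply (conv_cont3 (dp F) (a x) (b x) (c x) P2 _ _ _ (smooth3_cont _ (smooth3_dp F HF) (a x) (b x) (c x)) W1 W2 W3).
    intros h Hh. destruct (DQ_mvt (fun t => F (a x) t (c (x + h))) (fun t => dp F (a x) t (c (x + h))) (b x) (b (x + h)) (sm_derp F HF _ _)) as [xi [Hxi E]].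
    exists (a x), xi, (c (x + h)). rewrite Rminus_eq_0, Rabs_R0. repeat split; auto; try lra. apply Rabs_pos.
  - apply conv_deriv; auto.
  - apply (conv_cont3 (du F) (a x) (b x) (c x) P3 _ _ _ (smooth3_cont _ (smooth3_du F HF) (a x) (b x) (c x)) W1 W2 W3).
    intros h Hh. destruct (DQ_mvt (fun t => F (a x) (b x) t) (fun t => du F (a x) (b x) t) (c x) (c (x + h)) (sm_deru F HF _ _)) as [xi [Hxi E]].
    exists (a x), (b x), xi. rewrite !Rminus_eq_0, Rabs_R0. repeat split; auto; try lra; apply Rabs_pos.
  - apply conv_deriv; auto.
Qed.

Lemma implicit3 F (p u : R -> R) x du0 : smooth3 F ->
  continuous p x -> is_derive u x du0 -> (forall t, F t (p t) (u t) = 0) ->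
  dp F x (p x) (u x) <> 0 ->
  is_derive p x (- (dx F x (p x) (u x) + du F x (p x) (u x) * du0) / dp F x (p x) (u x)).
Proof.
  intros HF Hp Hu H0 Hnz. apply deriv_conv.
  set (M1 := fun h => DQ (fun t => F t (p (x + h)) (u (x + h))) (fun t => dx F t (p (x + h)) (u (x + h))) x (x + h)).
  set (M2 := fun h => DQ (fun t => F x t (u (x + h))) (fun t => dp F x t (u (x + h))) (p x) (p (x + h))).
  set (M3 := fun h => DQ (fun t => F x (p x) t) (fun t => du F x (p x) t) (u x) (u (x + h))).
  assert (Eq : forall h, h <> 0 -> M2 h * ((p (x + h) - p x) / h) = - (M1 h + M3 h * ((u (x + h) - u x) / h))).
  { intros h Hh. unfold M1, M2, M3.
    pose proof (DQ_eq (fun t => F t (p (x + h)) (u (x + h))) (fun t => dx F t (p (x + h)) (u (x + h))) x (x + h)) as E1.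
    pose proof (DQ_eq (fun t => F x t (u (x + h))) (fun t => dp F x t (u (x + h))) (p x) (p (x + h))) as E2.
    pose proof (DQ_eq (fun t => F x (p x) t) (fun t => du F x (p x) t) (u x) (u (x + h))) as E3.
    simpl in E1, E2, E3. rewrite H0 in E1. rewrite H0 in E3.
    replace (x + h - x) with h in E1 by ring.
    apply (Rmult_eq_reg_r h); [|auto].
    unfold Rdiv. field_simplify; [|auto|auto].
    set (q1 := DQ (fun t => F t (p (x + h)) (u (x + h))) (fun t => dx F t (p (x + h)) (u (x + h))) x (x + h)) in *.
    set (q2 := DQ (fun t => F x t (u (x + h))) (fun t => dp F x t (u (x + h))) (p x) (p (x + h))) in *.
    set (q3 := DQ (fun t => F x (p x) t) (fun t => du F x (p x) t) (u x) (u (x + h))) in *.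
    lra. }
  assert (W1 : conv (fun h => x + h) x).
  { intros eps He. exists eps; split; auto. intros h _ Hh. replace (x + h - x) with h by ring. auto. }
  assert (W2 := conv_cont_at p x Hp).
  assert (W3 := conv_cont_at u x (cR_der u x (ex_intro _ du0 Hu))).
  assert (C1 : conv M1 (dx F x (p x) (u x))).
  { apply (conv_cont3 (dx F) x (p x) (u x) M1 _ _ _ (smooth3_cont _ (smooth3_dx F HF) x (p x) (u x)) W1 W2 W3).
    intros h Hh. destruct (DQ_mvt (fun t => F t (p (x + h)) (u (x + h))) (fun t => dx F t (p (x + h)) (u (x + h))) x (x + h) (sm_derx F HF _ _)) as [xi [Hxi E]].
    exists xi, (p (x + h)), (u (x + h)). repeat split; auto; lra. }
  assert (C2 : conv M2 (dp F x (p x) (u x))).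
  { apply (conv_cont3 (dp F) x (p x) (u x) M2 _ _ _ (smooth3_cont _ (smooth3_dp F HF) x (p x) (u x)) W1 W2 W3).
    intros h Hh. destruct (DQ_mvt (fun t => F x t (u (x + h))) (fun t => dp F x t (u (x + h))) (p x) (p (x + h)) (sm_derp F HF _ _)) as [xi [Hxi E]].
    exists x, xi, (u (x + h)). rewrite Rminus_eq_0, Rabs_R0. repeat split; auto; try lra. apply Rabs_pos. }
  assert (C3 : conv M3 (du F x (p x) (u x))).
  { apply (conv_cont3 (du F) x (p x) (u x) M3 _ _ _ (smooth3_cont _ (smooth3_du F HF) x (p x) (u x)) W1 W2 W3).
    intros h Hh. destruct (DQ_mvt (fun t => F x (p x) t) (fun t => du F x (p x) t) (u x) (u (x + h)) (sm_deru F HF _ _)) as [xi [Hxi E]].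
    exists x, (p x), xi. rewrite !Rminus_eq_0, Rabs_R0. repeat split; auto; try lra; apply Rabs_pos. }
  assert (Hnz2 : exists d, 0 < d /\ forall h, h <> 0 -> Rabs h < d -> M2 h <> 0).
  { destruct (C2 (Rabs (dp F x (p x) (u x)) / 2) ltac:(apply Rdiv_lt_0_compat; [apply Rabs_pos_lt; auto| lra])) as [d [Hd Hh]].
    exists d; split; auto. intros h Hh0 Hh1 E. specialize (Hh h Hh0 Hh1). rewrite E in Hh.
    rewrite Rminus_0_l, Rabs_Ropp in Hh. pose proof (Rabs_pos_lt _ Hnz). lra. }
  apply conv_ext with (fun h => - (M1 h + M3 h * ((u (x + h) - u x) / h)) * / M2 h).
  { destruct Hnz2 as [d [Hd Hh]]. exists d; split; auto. intros h Hh0 Hh1.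
    rewrite <- (Eq h Hh0). field. split; [auto| apply Hh; auto]. }
  unfold Rdiv. apply conv_mult.
  - apply conv_opp. apply conv_plus; auto. apply conv_mult; auto. apply conv_deriv; auto.
  - apply conv_inv; auto.
Qed.

Lemma Cn_comp3 n : forall F a b c, smooth3 F -> Cn n a -> Cn n b -> Cn n c ->
  Cn n (fun y => F (a y) (b y) (c y)).
Proof.
  induction n as [|n IH]; intros F a b c HF Ha Hb Hc.
  - intro x. apply smooth3_comp_cont; auto.
  - assert (Ha' := Cn_S_le n a Ha). assert (Hb' := Cn_S_le n b Hb). assert (Hc' := Cn_S_le n c Hc).
    destruct Ha as [Had Hac]. destruct Hb as [Hbd Hbc]. destruct Hc as [Hcd Hcc].
    assert (HD : forall x, is_derive (fun y => F (a y) (b y) (c y)) x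
      (dx F (a x) (b x) (c x) * Derive a x + dp F (a x) (b x) (c x) * Derive b x + du F (a x) (b x) (c x) * Derive c x)).
    { intro x. apply chain3; auto; apply Derive_correct; auto. }
    split.
    + intro x. eexists; apply HD.
    + apply Cn_ext with (fun x => dx F (a x) (b x) (c x) * Derive a x + dp F (a x) (b x) (c x) * Derive b x + du F (a x) (b x) (c x) * Derive c x).
      * intro x. symmetry. apply is_derive_unique, HD.
      * apply Cn_plus; [apply Cn_plus|]; apply Cn_mult; auto; apply IH; auto.
        -- apply smooth3_dx; auto.
        -- apply smooth3_dp; auto.
        -- apply smooth3_du; auto.
Qed.

Lemma u0_Cn H u0 : smooth3 H ->
  (forall x, ex_derive u0 x) -> (forall x, H x (Derive u0 x) (u0 x) = 0) ->
  (forall x, dp H x (Derive u0 x) (u0 x) <> 0) -> (forall x, continuous (Derive u0) x) ->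
  forall n, Cn n (Derive u0) /\ Cn n u0.
Proof.
  intros HS Hd H0 Hnz Hc.
  assert (A : forall n, Cn n (Derive u0)).
  { induction n as [|n IH]; [exact Hc|].
    assert (Hu : Cn n u0) by (apply Cn_S_le; split; auto).
    assert (HD : forall x, is_derive (Derive u0) x
       (- (dx H x (Derive u0 x) (u0 x) + du H x (Derive u0 x) (u0 x) * Derive u0 x) / dp H x (Derive u0 x) (u0 x))).
    { intro x. apply implicit3; auto. apply Derive_correct; auto. }
    split.
    - intro x; eexists; apply HD.
    - apply Cn_ext with (fun x => - (dx H x (Derive u0 x) (u0 x) + du H x (Derive u0 x) (u0 x) * Derive u0 x) * / dp H x (Derive u0 x) (u0 x)).
      + intro x. symmetry. apply is_derive_unique, HD.
      + apply Cn_mult.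
        * apply Cn_opp, Cn_plus.
          -- apply (Cn_comp3 n (dx H) (fun y => y)); auto; [apply smooth3_dx; auto| apply Cn_id].
          -- apply Cn_mult; auto. apply (Cn_comp3 n (du H) (fun y => y)); auto; [apply smooth3_du; auto| apply Cn_id].
        * apply Cn_inv; auto. apply (Cn_comp3 n (dp H) (fun y => y)); auto; [apply smooth3_dp; auto| apply Cn_id]. }
  intro n. split; auto. apply Cn_S_le. split; auto.
Qed.

Lemma u0_C1 H u0 : smooth3 H -> (forall x p u, 0 < dp (dp H) x p u) -> superlinear_in_p H ->
  viscosity_solution H u0 ->
  (forall x, ex_derive u0 x -> dp H x (Derive u0 x) (u0 x) <> 0) ->
  (forall x, ex_derive u0 x) /\ (forall x, H x (Derive u0 x) (u0 x) = 0) /\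
  (forall x, dp H x (Derive u0 x) (u0 x) <> 0) /\ (forall x, continuous (Derive u0) x).
Proof.
  intros HS Hc Hsup Hv HB.
  pose proof (H_Setting H u0 HS Hc Hsup Hv) as S.
  assert (Hper : forall x, u0 (x + 1) = u0 x) by (apply (proj1 Hv)).
  assert (Hd : forall x, ex_derive u0 x) by (apply (S_all_diff _ _ _ S Hper HB)).
  assert (H0 : forall x, H x (Derive u0 x) (u0 x) = 0).
  { intro x. apply (S_RD_root _ _ _ S x). apply (RD_LD_of_derive u0 x). apply Derive_correct; auto. }
  assert (Hnz : forall x, dp H x (Derive u0 x) (u0 x) <> 0) by (intro x; apply HB; auto).
  repeat split; auto.
  apply (S_Dcont _ _ _ S Hd H0 Hnz).
Qed.

Lemma unif_curve (G : R -> R -> R -> R) (a b : R -> R) :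
  (forall x p u eps, 0 < eps -> exists d, 0 < d /\ forall x' p' u',
    Rabs (x' - x) < d -> Rabs (p' - p) < d -> Rabs (u' - u) < d ->
    Rabs (G x' p' u' - G x p u) < eps) ->
  (forall x, continuous a x) -> (forall x, continuous b x) ->
  forall eta, 0 < eta -> exists d, 0 < d /\ forall x D1 D2, 0 <= x <= 1 ->
    Rabs D1 < d -> Rabs D2 < d ->
    Rabs (G x (a x + D1) (b x + D2) - G x (a x) (b x)) < eta.
Proof.
  intros HG Ha Hb eta Heta.
  assert (Hloc : forall t, exists d : posreal, forall x D1 D2, Rabs (x - t) < d ->
      Rabs D1 < d -> Rabs D2 < d -> Rabs (G x (a x + D1) (b x + D2) - G x (a x) (b x)) < eta).
  { intro t.
    destruct (HG t (a t) (b t) (eta / 2) ltac:(lra)) as [d1 [Hd1 H1]].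
    destruct (cR_eps a t (Ha t) (d1 / 2) ltac:(lra)) as [da [Hda Ka]].
    destruct (cR_eps b t (Hb t) (d1 / 2) ltac:(lra)) as [db [Hdb Kb]].
    set (d := Rmin (d1 / 2) (Rmin da db)).
    assert (Hd : 0 < d) by (unfold d; repeat apply Rmin_pos; lra).
    exists (mkposreal d Hd). simpl. intros x D1 D2 Hx HD1 HD2.
    assert (Hd' : d <= d1 / 2 /\ d <= da /\ d <= db).
    { unfold d. pose proof (Rmin_l (d1/2) (Rmin da db)); pose proof (Rmin_r (d1/2) (Rmin da db)).
      pose proof (Rmin_l da db); pose proof (Rmin_r da db). lra. }
    specialize (Ka x ltac:(lra)). specialize (Kb x ltac:(lra)).
    apply Rabs_def2 in Ka; apply Rabs_def2 in Kb; apply Rabs_def2 in HD1; apply Rabs_def2 in HD2;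
    apply Rabs_def2 in Hx.
    assert (E1 := H1 x (a x + D1) (b x + D2) ltac:(apply Rabs_def1; lra) ltac:(apply Rabs_def1; lra) ltac:(apply Rabs_def1; lra)).
    assert (E2 := H1 x (a x) (b x) ltac:(apply Rabs_def1; lra) ltac:(apply Rabs_def1; lra) ltac:(apply Rabs_def1; lra)).
    apply Rabs_def2 in E1; apply Rabs_def2 in E2. apply Rabs_def1; lra. }
  set (delta := fun t => proj1_sig (constructive_indefinite_description _ (Hloc t))).
  assert (Hdelta : forall t x D1 D2, Rabs (x - t) < delta t ->
      Rabs D1 < delta t -> Rabs D2 < delta t -> Rabs (G x (a x + D1) (b x + D2) - G x (a x) (b x)) < eta).
  { intro t. unfold delta. destruct (constructive_indefinite_description _ (Hloc t)) as [d Hd]. simpl. exact Hd. }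
  destruct (compactness_value_1d 0 1 delta) as [d Hd].
  exists d; split; [apply cond_pos|].
  intros x D1 D2 Hx HD1 HD2.
  specialize (Hd x Hx). apply NNPP; intro Hn. apply Hd. intros [t [Ht [Hxt Hdt]]].
  apply Hn. apply (Hdelta t); auto; lra.
Qed.

Definition kf (H : R -> R -> R -> R) (u0 : R -> R) (t : R) : R :=
  (mu_of H u0 - Hu_along H u0 t) / Bfun H u0 t.

Lemma exRInt_R (f : R -> R) a b : (forall x, continuous f x) -> ex_RInt f a b.
Proof. intro Hc. apply (ex_RInt_continuous (V := R_CompleteNormedModule)). intros; apply Hc. Qed.

Lemma RInt_derive (f : R -> R) x : (forall x, continuous f x) -> is_derive (fun y => RInt f 0 y) x (f x).
Proof.
  intro Hc. apply (is_derive_RInt (V := R_CompleteNormedModule) f (fun y => RInt f 0 y) 0 x).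
  - exists (mkposreal 1 Rlt_0_1). intros y _. apply (RInt_correct (V := R_CompleteNormedModule)).
    apply exRInt_R; auto.
  - apply Hc.
Qed.

Lemma per_Derive (u : R -> R) x : (forall y, u (y + 1) = u y) -> ex_derive u (x + 1) -> Derive u (x + 1) = Derive u x.
Proof.
  intros Hp Hd. symmetry.
  rewrite (Derive_ext u (fun y => u (y + 1))) by (intro; rewrite Hp; reflexivity).
  apply is_derive_unique.
  apply is_derive_eq with (l := 1 * Derive u (x + 1)); [|ring].
  apply (dR_comp u (fun y => y + 1)); [apply Derive_correct; auto|].
  apply is_derive_eq with (l := 1 + 0); [apply dR_plus; [apply dR_id| apply dR_const]| ring].
Qed.


Record U0facts (H : R -> R -> R -> R) (u0 : R -> R) : Prop := {
  F_sm : smooth3 H;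
  F_Hper : forall x p u, H (x + 1) p u = H x p u;
  F_uper : forall x, u0 (x + 1) = u0 x;
  F_d : forall x, ex_derive u0 x;
  F_0 : forall x, H x (Derive u0 x) (u0 x) = 0;
  F_nz : forall x, dp H x (Derive u0 x) (u0 x) <> 0;
  F_c : forall x, continuous (Derive u0) x
}.

Lemma U_Cn H u0 (U : U0facts H u0) n : Cn n (Derive u0) /\ Cn n u0.
Proof. apply (u0_Cn H u0 (F_sm _ _ U) (F_d _ _ U) (F_0 _ _ U) (F_nz _ _ U) (F_c _ _ U)). Qed.

Lemma U_B_Cn H u0 (U : U0facts H u0) n : Cn n (Bfun H u0).
Proof.
  unfold Bfun. apply (Cn_comp3 n (dp H) (fun y => y)); [apply smooth3_dp, (F_sm _ _ U)| apply Cn_id| apply (proj1 (U_Cn H u0 U n))| apply (proj2 (U_Cn H u0 U n))].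
Qed.

Lemma U_Hu_Cn H u0 (U : U0facts H u0) n : Cn n (Hu_along H u0).
Proof.
  unfold Hu_along. apply (Cn_comp3 n (du H) (fun y => y)); [apply smooth3_du, (F_sm _ _ U)| apply Cn_id| apply (proj1 (U_Cn H u0 U n))| apply (proj2 (U_Cn H u0 U n))].
Qed.

Lemma U_kf_Cn H u0 (U : U0facts H u0) n : Cn n (kf H u0).
Proof.
  unfold kf, Rdiv. apply Cn_mult.
  - apply Cn_minus; [apply Cn_const| apply U_Hu_Cn; auto].
  - apply Cn_inv; [apply U_B_Cn; auto| intro x; apply (F_nz _ _ U)].
Qed.

Lemma U_kf_cont H u0 (U : U0facts H u0) x : continuous (kf H u0) x.
Proof. apply (U_kf_Cn H u0 U 0). Qed.

Lemma U_Dper H u0 (U : U0facts H u0) x : Derive u0 (x + 1) = Derive u0 x.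
Proof. apply per_Derive; [apply (F_uper _ _ U)| apply (F_d _ _ U)]. Qed.

Lemma dp_per H x p u : (forall x p u, H (x + 1) p u = H x p u) -> dp H (x + 1) p u = dp H x p u.
Proof. intro Hp. unfold dp. apply Derive_ext. intro; apply Hp. Qed.
Lemma du_per H x p u : (forall x p u, H (x + 1) p u = H x p u) -> du H (x + 1) p u = du H x p u.
Proof. intro Hp. unfold du. apply Derive_ext. intro; apply Hp. Qed.

Lemma U_kf_per H u0 (U : U0facts H u0) x : kf H u0 (x + 1) = kf H u0 x.
Proof.
  unfold kf, Bfun, Hu_along. rewrite (U_Dper H u0 U x), (F_uper _ _ U x).
  rewrite dp_per, du_per by apply (F_Hper _ _ U). reflexivity.
Qed.

Lemma U_B_sign H u0 (U : U0facts H u0) :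
  (forall x, 0 <= x <= 1 -> 0 < Bfun H u0 x) \/ (forall x, 0 <= x <= 1 -> Bfun H u0 x < 0).
Proof.
  assert (Hc : continuity (Bfun H u0)).
  { intro x. apply continuity_pt_filterlim. apply (U_B_Cn H u0 U 0). }
  assert (Hcn : continuity (fun x => - Bfun H u0 x)).
  { intro x. apply continuity_pt_filterlim. apply cR_opp. apply (U_B_Cn H u0 U 0). }
  assert (Hnz : forall x, Bfun H u0 x <> 0) by (intro; apply (F_nz _ _ U)).
  destruct (Rlt_or_le 0 (Bfun H u0 0)) as [Hp|Hn].
  - left. intros x Hx. apply Rnot_le_lt. intro Hle. destruct Hle as [Hlt|Heq]; [|apply (Hnz x); auto].
    destruct (Req_dec x 0) as [->|Hx0]; [lra|].
    destruct (IVT (fun y => - Bfun H u0 y) 0 x Hcn ltac:(lra) ltac:(lra) ltac:(lra)) as [z [_ Hz]].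
    apply (Hnz z). lra.
  - right. assert (Hn' : Bfun H u0 0 < 0) by (destruct Hn; auto; exfalso; apply (Hnz 0); auto).
    intros x Hx. apply Rnot_le_lt. intro Hle. destruct Hle as [Hlt|Heq]; [|apply (Hnz x); auto].
    destruct (Req_dec x 0) as [->|Hx0]; [lra|].
    destruct (IVT (Bfun H u0) 0 x Hc ltac:(lra) ltac:(lra) ltac:(lra)) as [z [_ Hz]].
    apply (Hnz z). lra.
Qed.

Lemma U_I1_nz H u0 (U : U0facts H u0) : RInt (fun t => / Bfun H u0 t) 0 1 <> 0.
Proof.
  assert (Hc : forall x, continuous (fun t => / Bfun H u0 t) x).
  { intro x. apply cR_inv; [apply (U_B_Cn H u0 U 0)| apply (F_nz _ _ U)]. }
  assert (E0 : RInt (fun _ => 0) 0 1 = 0) by (rewrite RInt_const; unfold scal; simpl; unfold mult; simpl; ring).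
  destruct (U_B_sign H u0 U) as [Hp|Hn].
  - assert (RInt (fun _ => 0) 0 1 < RInt (fun t => / Bfun H u0 t) 0 1).
    { apply RInt_lt; [lra| intros; apply Hc| intros; apply cR_const|].
      intros x Hx. apply Rinv_0_lt_compat, Hp; lra. }
    lra.
  - assert (RInt (fun t => / Bfun H u0 t) 0 1 < RInt (fun _ => 0) 0 1).
    { apply RInt_lt; [lra| intros; apply cR_const| intros; apply Hc|].
      intros x Hx. apply Rinv_lt_0_compat, Hn; lra. }
    lra.
Qed.

Lemma U_kf_int H u0 (U : U0facts H u0) : RInt (kf H u0) 0 1 = 0.
Proof.
  assert (HcB : forall x, continuous (fun t => / Bfun H u0 t) x).
  { intro x. apply cR_inv; [apply (U_B_Cn H u0 U 0)| apply (F_nz _ _ U)]. }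
  assert (HcHB : forall x, continuous (fun t => Hu_along H u0 t / Bfun H u0 t) x).
  { intro x. apply cR_mult; [apply (U_Hu_Cn H u0 U 0)| apply HcB]. }
  rewrite (RInt_ext (V := R_CompleteNormedModule) (kf H u0)
     (fun t => minus (scal (mu_of H u0) (/ Bfun H u0 t)) (Hu_along H u0 t / Bfun H u0 t))).
  2: { intros x _. unfold kf, minus, plus, opp, scal; simpl. unfold mult; simpl. field. apply (F_nz _ _ U). }
  rewrite (RInt_minus (V := R_CompleteNormedModule)).
  2: { apply (ex_RInt_continuous (V := R_CompleteNormedModule)). intros z _.
       apply cR_mult; [apply cR_const| apply HcB]. }
  2: { apply exRInt_R; auto. }
  rewrite (RInt_scal (V := R_CompleteNormedModule)) by (apply exRInt_R; auto).
  unfold minus, plus, opp, scal; simpl. unfold mult; simpl.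
  unfold mu_of. field. apply U_I1_nz; auto.
Qed.

Lemma Krho_per H u0 (U : U0facts H u0) x : RInt (kf H u0) 0 (x + 1) = RInt (kf H u0) 0 x.
Proof.
  assert (Hc := U_kf_cont H u0 U).
  rewrite <- (RInt_Chasles (V := R_CompleteNormedModule) (kf H u0) 0 1 (x + 1)) by (apply exRInt_R; auto).
  rewrite (U_kf_int H u0 U).
  pose proof (RInt_comp_lin (V := R_CompleteNormedModule) (kf H u0) 1 1 0 x) as E.
  replace (1 * 0 + 1) with 1 in E by ring. replace (1 * x + 1) with (x + 1) in E by ring.
  rewrite <- E by (apply exRInt_R; auto).
  unfold plus; simpl. rewrite Rplus_0_l.
  apply (RInt_ext (V := R_CompleteNormedModule)). intros y _.
  unfold scal; simpl; unfold mult; simpl. rewrite Rmult_1_l. replace (1 * y + 1) with (y + 1) by ring.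
  apply (U_kf_per H u0 U).
Qed.

Lemma rho_eq H u0 x : rho_of H u0 x = exp (RInt (kf H u0) 0 x).
Proof. reflexivity. Qed.

Lemma rho_per H u0 (U : U0facts H u0) x : rho_of H u0 (x + 1) = rho_of H u0 x.
Proof. rewrite !rho_eq. rewrite Krho_per; auto. Qed.

Lemma Krho_der H u0 (U : U0facts H u0) x : is_derive (fun y => RInt (kf H u0) 0 y) x (kf H u0 x).
Proof. apply RInt_derive. apply U_kf_cont; auto. Qed.

Lemma rho_der H u0 (U : U0facts H u0) x : is_derive (rho_of H u0) x (kf H u0 x * rho_of H u0 x).
Proof.
  apply dR_ext with (f := fun y => exp (RInt (kf H u0) 0 y)); [intro; reflexivity|].
  apply dR_comp; [|apply Krho_der; auto].
  apply is_derive_Reals, derivable_pt_lim_exp.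
Qed.

Lemma rho_Cn H u0 (U : U0facts H u0) n : Cn n (rho_of H u0).
Proof.
  apply Cn_ext with (fun y => exp (RInt (kf H u0) 0 y)); [intro; reflexivity|].
  apply Cn_exp. destruct n as [|n].
  - intro x. apply cR_der. eexists; apply Krho_der; auto.
  - apply Cn_S_le. split.
    + intro x. eexists; apply Krho_der; auto.
    + apply Cn_ext with (kf H u0); [|apply U_kf_Cn; auto].
      intro x. symmetry. apply is_derive_unique, Krho_der; auto.
Qed.

Lemma bound_on (f : R -> R) : (forall x, continuous f x) -> exists M, 0 <= M /\ forall x, 0 <= x <= 1 -> Rabs (f x) <= M.
Proof.
  intro Hc. destruct (EVT_max f 0 1 ltac:(lra) Hc) as [a [_ Ha]].
  destruct (EVT_min f 0 1 ltac:(lra) Hc) as [b [_ Hb]].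
  exists (Rabs (f a) + Rabs (f b)). split; [pose proof (Rabs_pos (f a)); pose proof (Rabs_pos (f b)); lra|].
  intros x Hx. specialize (Ha x Hx). specialize (Hb x Hx).
  pose proof (Rle_abs (f a)) as A1. pose proof (Rle_abs (- f b)) as A2.
  rewrite Rabs_Ropp in A2.
  pose proof (Rabs_pos (f a)); pose proof (Rabs_pos (f b)).
  pose proof (Rle_abs (- f a)) as A3. rewrite Rabs_Ropp in A3. pose proof (Rle_abs (f b)).
  apply Rabs_le; lra.
Qed.

Definition sgn_mu H u0 := mu_of H u0 / Rabs (mu_of H u0).

Lemma sgn_props H u0 : mu_of H u0 <> 0 -> Rabs (sgn_mu H u0) = 1 /\ sgn_mu H u0 * mu_of H u0 = Rabs (mu_of H u0).
Proof.
  intro Hm. unfold sgn_mu. destruct (Rlt_or_le 0 (mu_of H u0)) as [Hp|Hn].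
  - rewrite (Rabs_right (mu_of H u0)) by lra. split; [|field; lra].
    replace (mu_of H u0 / mu_of H u0) with 1 by (field; lra). apply Rabs_R1.
  - assert (Hn' : mu_of H u0 < 0) by (destruct Hn; auto; contradiction).
    rewrite (Rabs_left (mu_of H u0)) by lra. split; [|field; lra].
    replace (mu_of H u0 / - mu_of H u0) with (- (1)) by (field; lra). rewrite Rabs_Ropp. apply Rabs_R1.
Qed.

Lemma u_eps_Derive H u0 (U : U0facts H u0) e x :
  is_derive (u_eps H u0 e) x (Derive u0 x - sgn_mu H u0 * e * (kf H u0 x * rho_of H u0 x)).
Proof.
  unfold u_eps. apply dR_minus; [apply Derive_correct, (F_d _ _ U)|].
  apply is_derive_scal. apply rho_der; auto.
Qed.

Lemma Rabs_def2b x a : Rabs x <= a -> - a <= x <= a.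
Proof.
  intro H. pose proof (Rle_abs x). pose proof (Rle_abs (- x)). rewrite Rabs_Ropp in H1. lra.
Qed.

Lemma abs_prod_le a b M N : Rabs a <= M -> Rabs b <= N -> Rabs (a * b) <= M * N.
Proof.
  intros H1 H2. rewrite Rabs_mult. apply Rmult_le_compat; auto; apply Rabs_pos.
Qed.

Lemma estimate H u0 (U : U0facts H u0) : mu_of H u0 <> 0 ->
  exists eps0, 0 < eps0 /\ forall x e, 0 <= x <= 1 -> Rabs e <= eps0 -> e <> 0 ->
    H x (Derive (u_eps H u0 e) x) (u_eps H u0 e x) * e < 0.
Proof.
  intro Hmu.
  destruct (sgn_props H u0 Hmu) as [Hs1 Hsm].
  set (s := sgn_mu H u0) in *.
  set (rho := rho_of H u0).
  set (r1 := fun x => kf H u0 x * rho x).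
  assert (Hrc : forall x, continuous rho x) by (intro; apply (rho_Cn H u0 U 0)).
  assert (Hr1c : forall x, continuous r1 x).
  { intro x. unfold r1. apply cR_mult; [apply U_kf_cont; auto| apply Hrc]. }
  destruct (bound_on r1 Hr1c) as [Mr [HMr0 HMr]].
  destruct (bound_on rho Hrc) as [Mq [HMq0 HMq]].
  destruct (EVT_min rho 0 1 ltac:(lra) Hrc) as [m0 [Hm0 Hmin]].
  set (rmin := rho m0).
  assert (Hrmin : 0 < rmin) by (unfold rmin, rho; rewrite rho_eq; apply exp_pos).
  set (R0 := Mr + Mq + 1).
  assert (HR0 : 1 <= R0) by (unfold R0; lra).
  assert (Hmua : 0 < Rabs (mu_of H u0)) by (apply Rabs_pos_lt; auto).
  set (eta := Rabs (mu_of H u0) * rmin / (4 * R0)).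
  assert (Heta : 0 < eta) by (unfold eta; apply Rdiv_lt_0_compat; [apply Rmult_lt_0_compat; lra| lra]).
  assert (Hsm3 := F_sm _ _ U).
  assert (Hu0c : forall x, continuous u0 x) by (intro; apply cR_der, (F_d _ _ U)).
  destruct (unif_curve (dp H) (Derive u0) u0 (smooth3_cont _ (smooth3_dp H Hsm3)) (F_c _ _ U) Hu0c eta Heta) as [d1 [Hd1 K1]].
  destruct (unif_curve (du H) (Derive u0) u0 (smooth3_cont _ (smooth3_du H Hsm3)) (F_c _ _ U) Hu0c eta Heta) as [d2 [Hd2 K2]].
  set (d := Rmin d1 d2).
  assert (Hd : 0 < d /\ d <= d1 /\ d <= d2) by (unfold d; pose proof (Rmin_l d1 d2); pose proof (Rmin_r d1 d2); pose proof (Rmin_pos d1 d2 Hd1 Hd2); lra).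
  destruct Hd as [Hd0 [Hdd1 Hdd2]].
  exists (d / (2 * R0)). split; [apply Rdiv_lt_0_compat; lra|].
  intros x e Hx He Hne.
  assert (HDu : Derive (u_eps H u0 e) x = Derive u0 x - s * e * r1 x).
  { apply is_derive_unique. apply (u_eps_Derive H u0 U e x). }
  assert (Hue : u_eps H u0 e x = u0 x - s * e * rho x) by reflexivity.
  rewrite HDu, Hue.
  set (phi := fun t => H x (Derive u0 x - s * t * r1 x) (u0 x - s * t * rho x)).
  set (Psi := fun t => dx H x (Derive u0 x - s * t * r1 x) (u0 x - s * t * rho x) * 0
     + dp H x (Derive u0 x - s * t * r1 x) (u0 x - s * t * rho x) * (- (s * r1 x))
     + du H x (Derive u0 x - s * t * r1 x) (u0 x - s * t * rho x) * (- (s * rho x))).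
  assert (Hphid : forall t, is_derive phi t (Psi t)).
  { intro t. unfold phi, Psi.
    apply (chain3 H (fun _ => x) (fun t => Derive u0 x - s * t * r1 x) (fun t => u0 x - s * t * rho x)); auto.
    - apply dR_const.
    - auto_derive; [exact I| ring].
    - auto_derive; [exact I| ring]. }
  destruct (MVT_gen phi 0 e Psi) as [th [Hth Heq]].
  { intros t _. apply Hphid. }
  { intros t _. apply continuity_pt_filterlim, cR_der. eexists; apply Hphid. }
  assert (Hphi0 : phi 0 = 0).
  { unfold phi. replace (Derive u0 x - s * 0 * r1 x) with (Derive u0 x) by ring.
    replace (u0 x - s * 0 * rho x) with (u0 x) by ring. apply (F_0 _ _ U). }
  rewrite Hphi0 in Heq.
  assert (Hthb : Rabs th <= d / (2 * R0)).
  { apply Rabs_le. unfold Rmin, Rmax in Hth. apply Rabs_def2b in He.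
    destruct Rle_dec; lra. }
  assert (Hr1x := HMr x Hx). assert (Hrx := HMq x Hx).
  assert (HD1 : Rabs (- (s * th * r1 x)) < d).
  { rewrite Rabs_Ropp, Rabs_mult, Rabs_mult, Hs1, Rmult_1_l.
    apply Rle_lt_trans with (d / (2 * R0) * Mr).
    - apply Rmult_le_compat; auto; apply Rabs_pos.
    - apply Rle_lt_trans with (d / (2 * R0) * R0); [apply Rmult_le_compat_l; [apply Rlt_le, Rdiv_lt_0_compat; lra| unfold R0; lra]|].
      replace (d / (2 * R0) * R0) with (d / 2) by (field; lra). lra. }
  assert (HD2 : Rabs (- (s * th * rho x)) < d).
  { rewrite Rabs_Ropp, Rabs_mult, Rabs_mult, Hs1, Rmult_1_l.
    apply Rle_lt_trans with (d / (2 * R0) * Mq).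
    - apply Rmult_le_compat; auto; apply Rabs_pos.
    - apply Rle_lt_trans with (d / (2 * R0) * R0); [apply Rmult_le_compat_l; [apply Rlt_le, Rdiv_lt_0_compat; lra| unfold R0; lra]|].
      replace (d / (2 * R0) * R0) with (d / 2) by (field; lra). lra. }
  assert (E1 : Derive u0 x - s * th * r1 x = Derive u0 x + - (s * th * r1 x)) by ring.
  assert (E2 : u0 x - s * th * rho x = u0 x + - (s * th * rho x)) by ring.
  pose proof (K1 x (- (s * th * r1 x)) (- (s * th * rho x)) Hx ltac:(lra) ltac:(lra)) as B1.
  pose proof (K2 x (- (s * th * r1 x)) (- (s * th * rho x)) Hx ltac:(lra) ltac:(lra)) as B2.
  rewrite <- E1, <- E2 in B1, B2.
  set (P := dp H x (Derive u0 x - s * th * r1 x) (u0 x - s * th * rho x)) in *.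
  set (Q := du H x (Derive u0 x - s * th * r1 x) (u0 x - s * th * rho x)) in *.
  assert (HPsi : Psi th = (P - Bfun H u0 x) * (- (s * r1 x)) + (Q - Hu_along H u0 x) * (- (s * rho x))
      - Rabs (mu_of H u0) * rho x).
  { unfold Psi. fold P Q. rewrite <- Hsm. unfold r1, kf, Bfun, Hu_along.
    field. apply (F_nz _ _ U). }
  assert (Hb1 : Rabs ((P - Bfun H u0 x) * (- (s * r1 x))) <= eta * Mr).
  { apply abs_prod_le; [left; exact B1|]. rewrite Rabs_Ropp, Rabs_mult, Hs1, Rmult_1_l. auto. }
  assert (Hb2 : Rabs ((Q - Hu_along H u0 x) * (- (s * rho x))) <= eta * Mq).
  { apply abs_prod_le; [left; exact B2|]. rewrite Rabs_Ropp, Rabs_mult, Hs1, Rmult_1_l. auto. }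
  assert (Hrx2 : rmin <= rho x) by (apply Hmin; auto).
  assert (Hmr : Rabs (mu_of H u0) * rmin <= Rabs (mu_of H u0) * rho x) by (apply Rmult_le_compat_l; lra).
  assert (Heta2 : eta * Mr + eta * Mq < Rabs (mu_of H u0) * rmin / 2).
  { assert (eta * Mr + eta * Mq <= eta * R0) by (unfold R0; assert (0 < eta) by auto; nra).
    assert (eta * R0 = Rabs (mu_of H u0) * rmin / 4) by (unfold eta; field; lra).
    assert (0 < Rabs (mu_of H u0) * rmin) by (apply Rmult_lt_0_compat; lra).
    lra. }
  apply Rabs_def2b in Hb1. apply Rabs_def2b in Hb2.
  assert (HPneg : Psi th < 0).
  { rewrite HPsi. assert (0 < Rabs (mu_of H u0) * rmin) by (apply Rmult_lt_0_compat; lra). lra. }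
  change (phi e * e < 0).
  replace (phi e) with (Psi th * e) by (rewrite Rminus_0_r in Heq; rewrite Rminus_0_r in Heq; exact (eq_sym Heq)).
  replace (Psi th * e * e) with (Psi th * (e * e)) by ring.
  apply Rmult_neg_pos; auto.
  assert (0 < e * e) by (apply Rsqr_pos_lt; auto). lra.
Qed.

Theorem lemma2p2 (H : R -> R -> R -> R) (kappa : R) (u0 : R -> R)
  (Hper : forall x p u, H (x + 1) p u = H x p u)
  (Hsmooth : smooth3 H)
  (Hconv : forall x p u, 0 < dp (dp H) x p u)
  (Hsuper : superlinear_in_p H)
  (Hkappa : 0 < kappa)
  (Hdu : forall x p u, Rabs (du H x p u) <= kappa)
  (Hvisc : viscosity_solution H u0)
  (HB : forall x, ex_derive u0 x -> dp H x (Derive u0 x) (u0 x) <> 0)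
  (Hmu : mu_of H u0 <> 0) :
  exists eps0, 0 < eps0 /\
    (forall eps, 0 < eps <= eps0 ->
       periodic1 (u_eps H u0 eps) /\ smooth1 (u_eps H u0 eps) /\
       forall x, 0 <= x <= 1 ->
         H x (Derive (u_eps H u0 eps) x) (u_eps H u0 eps x) < 0) /\
    (forall eps, - eps0 <= eps < 0 ->
       periodic1 (u_eps H u0 eps) /\ smooth1 (u_eps H u0 eps) /\
       forall x, 0 <= x <= 1 ->
         0 < H x (Derive (u_eps H u0 eps) x) (u_eps H u0 eps x)).
Proof.
  destruct (u0_C1 H u0 Hsmooth Hconv Hsuper Hvisc HB) as [Hd [H0 [Hnz Hc]]].
  assert (U : U0facts H u0).
  { constructor; auto. apply (proj1 Hvisc). }
  destruct (estimate H u0 U Hmu) as [eps0 [Heps0 Hest]].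
  assert (Hpe : forall eps, periodic1 (u_eps H u0 eps)).
  { intros eps x. unfold u_eps. rewrite (F_uper _ _ U x), (rho_per H u0 U x). reflexivity. }
  assert (Hse : forall eps, smooth1 (u_eps H u0 eps)).
  { intro eps. apply Cn_smooth1. intro n. unfold u_eps.
    apply Cn_minus; [apply (proj2 (U_Cn H u0 U n))|].
    apply (Cn_mult n (fun _ => mu_of H u0 / Rabs (mu_of H u0) * eps) (rho_of H u0)); [apply Cn_const| apply rho_Cn; auto]. }
  exists eps0. split; [exact Heps0|]. split.
  - intros eps Heps. split; [apply Hpe|]. split; [apply Hse|].
    intros x Hx. specialize (Hest x eps Hx ltac:(rewrite Rabs_right; lra) ltac:(lra)).
    destruct (Rlt_or_le (H x (Derive (u_eps H u0 eps) x) (u_eps H u0 eps x)) 0) as [Hl|Hge]; auto.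
    exfalso. assert (0 <= H x (Derive (u_eps H u0 eps) x) (u_eps H u0 eps x) * eps) by (apply Rmult_le_pos; lra). lra.
  - intros eps Heps. split; [apply Hpe|]. split; [apply Hse|].
    intros x Hx. specialize (Hest x eps Hx ltac:(rewrite Rabs_left; lra) ltac:(lra)).
    destruct (Rlt_or_le 0 (H x (Derive (u_eps H u0 eps) x) (u_eps H u0 eps x))) as [Hl|Hge]; auto.
    exfalso. assert (0 <= H x (Derive (u_eps H u0 eps) x) (u_eps H u0 eps x) * eps).
    { replace (H x (Derive (u_eps H u0 eps) x) (u_eps H u0 eps x) * eps) with
        ((- H x (Derive (u_eps H u0 eps) x) (u_eps H u0 eps x)) * (- eps)) by ring.
      apply Rmult_le_pos; lra. }
    lra.
Qed.
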